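(* Let $\mathcal{H}_A,\mathcal{H}_B$ be finite-dimensional Hilbert spaces, let $|\Psi\rangle,|\Phi\rangle\in\mathcal{H}_A\otimes\mathcal{H}_B$ be unit vectors (not necessarily orthogonal), and let $\alpha,\beta\in\mathbb{C}$ with $|\alpha|^2+|\beta|^2=1$ such that $|\Gamma\rangle=\alpha|\Psi\rangle+\beta|\Phi\rangle\neq 0$. Define $\rho^{AB}=|\alpha|^2|\Psi\rangle\langle\Psi|+|\beta|^2|\Phi\rangle\langle\Phi|$, $\rho^A=\mathrm{Tr}_B\rho^{AB}$, $\rho^B=\mathrm{Tr}_A\rho^{AB}$. Then $$\big\|\,|\Gamma\rangle\big\|^2\,E(\Gamma)\le 2\Big[|\alpha|^2E(\Psi)+|\beta|^2E(\Phi)+h_2(|\alpha|^2)-|S(\rho^A)-S(\rho^B)|\Big].$$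
   Context: $S(\rho)=-\mathrm{Tr}(\rho\log\rho)$ is the von Neumann entropy (logarithm base 2). For a nonzero vector $|\chi\rangle\in\mathcal{H}_A\otimes\mathcal{H}_B$, its entanglement is $E(\chi)=S\big(\mathrm{Tr}_B|\chi\rangle\langle\chi|/\langle\chi|\chi\rangle\big)$, i.e. the entropy of entanglement of the normalized vector. $h_2(x)=-x\log x-(1-x)\log(1-x)$ is the binary entropy function, with $0\log 0=0$. *)

(* Defs.v *)
From Stdlib Require Import Reals Lra ClassicalEpsilon.
Open Scope R_scope.

Record Cx := mkC { Re : R; Im : R }.
Definition C0 : Cx := mkC 0 0.
Definition RtoC (x : R) : Cx := mkC x 0.
Definition Cadd (z w : Cx) : Cx := mkC (Re z + Re w) (Im z + Im w).
Definition Cmul (z w : Cx) : Cx :=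
  mkC (Re z * Re w - Im z * Im w) (Re z * Im w + Im z * Re w).
Definition Cconj (z : Cx) : Cx := mkC (Re z) (- Im z).
Definition Cnorm2 (z : Cx) : R := Re z * Re z + Im z * Im z.

Fixpoint rsum (n : nat) (f : nat -> R) : R :=
  match n with O => 0 | S m => rsum m f + f m end.
Fixpoint csum (n : nat) (f : nat -> Cx) : Cx :=
  match n with O => C0 | S m => Cadd (csum m f) (f m) end.

Definition log2 (x : R) : R := ln x / ln 2.
Definition xlog2x (x : R) : R := if Req_EM_T x 0 then 0 else x * log2 x.
Definition h2 (x : R) : R := - xlog2x x - xlog2x (1 - x).

(* ---------- matrices (d x d, entries indexed by i,j < d) ---------- *)
Definition Mat := nat -> nat -> Cx.

Definition unitary (d : nat) (U : Mat) : Prop :=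
  forall i j, (i < d)%nat -> (j < d)%nat ->
    csum d (fun k => Cmul (U i k) (Cconj (U j k))) =
      (if Nat.eqb i j then RtoC 1 else C0).

Definition spectral_decomp (d : nat) (M : Mat) (U : Mat) (lam : nat -> R) : Prop :=
  unitary d U /\
  forall i j, (i < d)%nat -> (j < d)%nat ->
    M i j = csum d (fun k => Cmul (Cmul (U i k) (RtoC (lam k))) (Cconj (U j k))).

Definition vN_entropy (d : nat) (M : Mat) : R :=
  epsilon (inhabits 0%R) (fun s => exists U lam,
    spectral_decomp d M U lam /\ s = - rsum d (fun k => xlog2x (lam k))).

Definition BVec := nat -> nat -> Cx.   (* chi i j = coefficient of |i>|j> *)

Definition bnorm2 (dA dB : nat) (chi : BVec) : R :=
  rsum dA (fun i => rsum dB (fun j => Cnorm2 (chi i j))).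

Definition bcomb (a b : Cx) (psi phi : BVec) : BVec :=
  fun i j => Cadd (Cmul a (psi i j)) (Cmul b (phi i j)).

(* Tr_B |chi><chi| , a dA x dA matrix *)
Definition ptraceB (dB : nat) (chi : BVec) : Mat :=
  fun i i' => csum dB (fun j => Cmul (chi i j) (Cconj (chi i' j))).
(* Tr_A |chi><chi| , a dB x dB matrix *)
Definition ptraceA (dA : nat) (chi : BVec) : Mat :=
  fun j j' => csum dA (fun i => Cmul (chi i j) (Cconj (chi i j'))).

Definition Mscale (c : R) (M : Mat) : Mat := fun i j => Cmul (RtoC c) (M i j).
Definition Madd (M N : Mat) : Mat := fun i j => Cadd (M i j) (N i j).

Definition entanglement (dA dB : nat) (chi : BVec) : R :=
  vN_entropy dA (Mscale (/ bnorm2 dA dB chi) (ptraceB dB chi)).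

(* Main.v *)
Require Import Defs.
From Stdlib Require Import Reals Lra Lia Ring Field ClassicalEpsilon Classical.
Open Scope R_scope.

Lemma Cx_eq : forall z w : Cx, Re z = Re w -> Im z = Im w -> z = w.
Proof. intros [a b] [c d]; simpl; intros; subst; reflexivity. Qed.

Notation Cone := (RtoC 1).
Definition Copp (z : Cx) : Cx := mkC (- Re z) (- Im z).
Definition Csub (z w : Cx) : Cx := Cadd z (Copp w).

Lemma Cring_theory : ring_theory C0 Cone Cadd Cmul Csub Copp (@eq Cx).
Proof.
  constructor; intros; apply Cx_eq; unfold Csub, Copp, Cadd, Cmul, C0, Cone, RtoC;
  simpl; ring.
Qed.
Add Ring Cring : Cring_theory.

Lemma RtoC_mul a b : RtoC (a * b) = Cmul (RtoC a) (RtoC b).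
Proof. apply Cx_eq; simpl; ring. Qed.
Lemma RtoC_add a b : RtoC (a + b) = Cadd (RtoC a) (RtoC b).
Proof. apply Cx_eq; simpl; ring. Qed.
Lemma RtoC_opp a : RtoC (- a) = Copp (RtoC a).
Proof. apply Cx_eq; simpl; ring. Qed.
Lemma RtoC_0 : RtoC 0 = C0. Proof. reflexivity. Qed.
Lemma Cconj_add z w : Cconj (Cadd z w) = Cadd (Cconj z) (Cconj w).
Proof. apply Cx_eq; simpl; ring. Qed.
Lemma Cconj_mul z w : Cconj (Cmul z w) = Cmul (Cconj z) (Cconj w).
Proof. apply Cx_eq; simpl; ring. Qed.
Lemma Cconj_opp z : Cconj (Copp z) = Copp (Cconj z).
Proof. apply Cx_eq; simpl; ring. Qed.
Lemma Cconj_conj z : Cconj (Cconj z) = z.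
Proof. apply Cx_eq; simpl; ring. Qed.
Lemma Cconj_RtoC r : Cconj (RtoC r) = RtoC r.
Proof. apply Cx_eq; simpl; ring. Qed.
Lemma Cconj_C0 : Cconj C0 = C0.
Proof. apply Cx_eq; simpl; ring. Qed.
Lemma Cnorm2_eq z : Cmul (Cconj z) z = RtoC (Cnorm2 z).
Proof. apply Cx_eq; unfold Cnorm2; simpl; ring. Qed.
Lemma Cnorm2_eq' z : Cmul z (Cconj z) = RtoC (Cnorm2 z).
Proof. apply Cx_eq; unfold Cnorm2; simpl; ring. Qed.
Lemma Cnorm2_nonneg z : 0 <= Cnorm2 z.
Proof. unfold Cnorm2; nra. Qed.
Lemma Cnorm2_mul z w : Cnorm2 (Cmul z w) = Cnorm2 z * Cnorm2 w.
Proof. unfold Cnorm2; simpl; ring. Qed.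
Lemma Cnorm2_conj z : Cnorm2 (Cconj z) = Cnorm2 z.
Proof. unfold Cnorm2; simpl; ring. Qed.
Lemma Cnorm2_RtoC r : Cnorm2 (RtoC r) = r * r.
Proof. unfold Cnorm2; simpl; ring. Qed.
Lemma Cnorm2_zero z : Cnorm2 z = 0 -> z = C0.
Proof. unfold Cnorm2; destruct z as [a b]; simpl; intros; apply Cx_eq; simpl; nra. Qed.
Lemma Cnorm2_pos z : z <> C0 -> 0 < Cnorm2 z.
Proof. intros H. destruct (Cnorm2_nonneg z); auto. exfalso; apply H, Cnorm2_zero; auto. Qed.
Lemma Re_add z w : Re (Cadd z w) = Re z + Re w. Proof. reflexivity. Qed.
Lemma Im_add z w : Im (Cadd z w) = Im z + Im w. Proof. reflexivity. Qed.
Lemma Re_RtoC r : Re (RtoC r) = r. Proof. reflexivity. Qed.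
Lemma Im_RtoC r : Im (RtoC r) = 0. Proof. reflexivity. Qed.
Lemma Re_mul_RtoC r z : Re (Cmul (RtoC r) z) = r * Re z.
Proof. simpl; ring. Qed.
Lemma Re_bound z w : 2 * Re (Cmul z w) <= Cnorm2 z + Cnorm2 w.
Proof. unfold Cnorm2; destruct z as [a b], w as [c d]; simpl.
  pose proof (pow2_ge_0 (a - c)); pose proof (pow2_ge_0 (b + d)). nra. Qed.
Lemma Cnorm2_add_le z w : Cnorm2 (Cadd z w) <= 2 * Cnorm2 z + 2 * Cnorm2 w.
Proof. unfold Cnorm2; destruct z as [a b], w as [c d]; simpl.
  pose proof (pow2_ge_0 (a - c)); pose proof (pow2_ge_0 (b - d)). nra. Qed.
Lemma Cnorm2_Re z : Cnorm2 z = Re (Cmul (Cconj z) z).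
Proof. unfold Cnorm2; simpl; ring. Qed.
Lemma Re_conj z : Re (Cconj z) = Re z. Proof. reflexivity. Qed.
Lemma Re_add_conj z : Re (Cadd z (Cconj z)) = 2 * Re z.
Proof. simpl; ring. Qed.

Lemma rsum_ext n f g : (forall k, (k < n)%nat -> f k = g k) -> rsum n f = rsum n g.
Proof.
  induction n; simpl; intros; auto.
  rewrite IHn by (intros; apply H; lia). rewrite H by lia; auto.
Qed.
Lemma csum_ext n f g : (forall k, (k < n)%nat -> f k = g k) -> csum n f = csum n g.
Proof.
  induction n; simpl; intros; auto.
  rewrite IHn by (intros; apply H; lia). rewrite H by lia; auto.
Qed.
Lemma rsum_add n f g : rsum n (fun k => f k + g k) = rsum n f + rsum n g.
Proof. induction n; simpl; [ring|rewrite IHn; ring]. Qed.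
Lemma csum_add n f g : csum n (fun k => Cadd (f k) (g k)) = Cadd (csum n f) (csum n g).
Proof. induction n; simpl. apply Cx_eq; simpl; ring. rewrite IHn; ring. Qed.
Lemma rsum_scal n c f : rsum n (fun k => c * f k) = c * rsum n f.
Proof. induction n; simpl; [ring|rewrite IHn; ring]. Qed.
Lemma csum_scal n c f : csum n (fun k => Cmul c (f k)) = Cmul c (csum n f).
Proof. induction n; simpl. apply Cx_eq; simpl; ring. rewrite IHn; ring. Qed.
Lemma csum_scal_r n c f : csum n (fun k => Cmul (f k) c) = Cmul (csum n f) c.
Proof. induction n; simpl. apply Cx_eq; simpl; ring. rewrite IHn; ring. Qed.
Lemma rsum_opp n f : rsum n (fun k => - f k) = - rsum n f.
Proof. induction n; simpl; [ring|rewrite IHn; ring]. Qed.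
Lemma rsum_0 n : rsum n (fun _ => 0) = 0.
Proof. induction n; simpl; [ring|rewrite IHn; ring]. Qed.
Lemma csum_0 n : csum n (fun _ => C0) = C0.
Proof. induction n; simpl; [reflexivity|rewrite IHn; ring]. Qed.
Lemma rsum_swap n m f : rsum n (fun i => rsum m (fun j => f i j)) = rsum m (fun j => rsum n (fun i => f i j)).
Proof.
  induction n; simpl. rewrite rsum_0; auto.
  rewrite IHn, <- rsum_add. auto.
Qed.
Lemma csum_swap n m f : csum n (fun i => csum m (fun j => f i j)) = csum m (fun j => csum n (fun i => f i j)).
Proof.
  induction n; simpl. rewrite csum_0; auto.
  rewrite IHn, <- csum_add. auto.
Qed.
Lemma Re_csum n f : Re (csum n f) = rsum n (fun k => Re (f k)).
Proof. induction n; simpl; auto. rewrite <- IHn; auto. Qed.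
Lemma Im_csum n f : Im (csum n f) = rsum n (fun k => Im (f k)).
Proof. induction n; simpl; auto. rewrite <- IHn; auto. Qed.
Lemma csum_conj n f : Cconj (csum n f) = csum n (fun k => Cconj (f k)).
Proof. induction n; simpl. apply Cx_eq; simpl; ring. rewrite Cconj_add, IHn; auto. Qed.
Lemma csum_RtoC n f : csum n (fun k => RtoC (f k)) = RtoC (rsum n f).
Proof. induction n; simpl; auto. rewrite IHn, RtoC_add; auto. Qed.
Lemma rsum_nonneg n f : (forall k, (k < n)%nat -> 0 <= f k) -> 0 <= rsum n f.
Proof. induction n; simpl; intros; [lra|]. assert (0 <= f n) by (apply H; lia).
  assert (0 <= rsum n f) by (apply IHn; intros; apply H; lia). lra. Qed.
Lemma rsum_le n f g : (forall k, (k < n)%nat -> f k <= g k) -> rsum n f <= rsum n g.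
Proof. induction n; simpl; intros; [lra|]. assert (f n <= g n) by (apply H; lia).
  assert (rsum n f <= rsum n g) by (apply IHn; intros; apply H; lia). lra. Qed.
Lemma rsum_term_le n f k : (forall k, (k < n)%nat -> 0 <= f k) -> (k < n)%nat -> f k <= rsum n f.
Proof. induction n; simpl; intros; [lia|].
  assert (0 <= rsum n f) by (apply rsum_nonneg; intros; apply H; lia).
  destruct (Nat.eq_dec k n). subst. lra.
  assert (f k <= rsum n f) by (apply IHn; [intros; apply H; lia|lia]).
  assert (0 <= f n) by (apply H; lia). lra. Qed.
Lemma rsum_zero_nonneg n f : (forall k, (k < n)%nat -> 0 <= f k) -> rsum n f = 0 ->
  forall k, (k < n)%nat -> f k = 0.
Proof. intros. assert (f k <= rsum n f) by (apply rsum_term_le; auto).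
  assert (0 <= f k) by auto. lra. Qed.
Lemma rsum_pos_exists n f : (forall k, (k < n)%nat -> 0 <= f k) -> 0 < rsum n f ->
  exists k, (k < n)%nat /\ 0 < f k.
Proof. intros. destruct (classic (exists k, (k < n)%nat /\ 0 < f k)); auto.
  exfalso. assert (rsum n f <= rsum n (fun _ => 0)).
  apply rsum_le. intros. destruct (Rlt_le_dec 0 (f k)); auto. exfalso; eauto.
  rewrite rsum_0 in H2; lra. Qed.
Lemma csum_delta n j f : (j < n)%nat ->
  csum n (fun k => Cmul (if Nat.eqb k j then Cone else C0) (f k)) = f j.
Proof.
  induction n; simpl; intros; [lia|].
  destruct (Nat.eq_dec j n).
  - subst. rewrite Nat.eqb_refl. rewrite (csum_ext n _ (fun _ => C0)).
    rewrite csum_0. ring.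
    intros. destruct (Nat.eqb_spec k n); [lia|]. ring.
  - rewrite IHn by lia. destruct (Nat.eqb_spec n j); [lia|]. ring.
Qed.
Lemma csum_delta' n j f : (j < n)%nat ->
  csum n (fun k => Cmul (if Nat.eqb j k then Cone else C0) (f k)) = f j.
Proof. intros. rewrite <- (csum_delta n j f) by auto. apply csum_ext; intros.
  rewrite Nat.eqb_sym; auto. Qed.
Lemma rsum_delta n j f : (j < n)%nat ->
  rsum n (fun k => (if Nat.eqb k j then 1 else 0) * f k) = f j.
Proof.
  induction n; simpl; intros; [lia|].
  destruct (Nat.eq_dec j n).
  - subst. rewrite Nat.eqb_refl. rewrite (rsum_ext n _ (fun _ => 0)).
    rewrite rsum_0. ring.
    intros. destruct (Nat.eqb_spec k n); [lia|]. ring.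
  - rewrite IHn by lia. destruct (Nat.eqb_spec n j); [lia|]. ring.
Qed.
Lemma csum_split a b f : csum (a + b) f = Cadd (csum a f) (csum b (fun k => f (a + k)%nat)).
Proof. induction b; simpl. rewrite Nat.add_0_r; ring.
  rewrite Nat.add_succ_r; simpl. rewrite IHb; ring. Qed.
Lemma rsum_split a b f : rsum (a + b) f = rsum a f + rsum b (fun k => f (a + k)%nat).
Proof. induction b; simpl. rewrite Nat.add_0_r; ring.
  rewrite Nat.add_succ_r; simpl. rewrite IHb; ring. Qed.
Lemma rsum_pow2 n f : Cnorm2 (csum n f) <= 2 ^ n * rsum n (fun k => Cnorm2 (f k)).
Proof.
  induction n; simpl. unfold Cnorm2; simpl; lra.
  eapply Rle_trans. apply Cnorm2_add_le.
  assert (0 <= rsum n (fun k => Cnorm2 (f k))) by (apply rsum_nonneg; intros; apply Cnorm2_nonneg).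
  assert (1 <= 2 ^ n) by (apply pow_R1_Rle; lra).
  pose proof (Cnorm2_nonneg (f n)). nra.
Qed.

Definition delta (i j : nat) : Cx := if Nat.eqb i j then Cone else C0.
Definition vnorm2 n (x : nat -> Cx) := rsum n (fun i => Cnorm2 (x i)).
Definition ip n (x y : nat -> Cx) := csum n (fun i => Cmul (Cconj (x i)) (y i)).
Definition mv n (M : Mat) (x : nat -> Cx) : nat -> Cx := fun i => csum n (fun j => Cmul (M i j) (x j)).
Definition quad n M x := Re (ip n x (mv n M x)).
Definition herm n (M : Mat) := forall i j, (i < n)%nat -> (j < n)%nat -> M j i = Cconj (M i j).
Definition psd n (M : Mat) := forall x, 0 <= quad n M x.
Definition col (U : Mat) k : nat -> Cx := fun i => U i k.

Lemma csum_opp n f : csum n (fun k => Copp (f k)) = Copp (csum n f).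
Proof. induction n; simpl. apply Cx_eq; simpl; ring. rewrite IHn; ring. Qed.

Lemma csum_mul n m f g : Cmul (csum n f) (csum m g) = csum n (fun i => csum m (fun j => Cmul (f i) (g j))).
Proof. rewrite <- csum_scal_r. apply csum_ext; intros. rewrite <- csum_scal. auto. Qed.

Lemma delta_sym i j : delta i j = delta j i.
Proof. unfold delta; rewrite Nat.eqb_sym; auto. Qed.
Lemma csum_delta_l n j f : (j < n)%nat -> csum n (fun k => Cmul (delta k j) (f k)) = f j.
Proof. apply csum_delta. Qed.
Lemma csum_delta_r n j f : (j < n)%nat -> csum n (fun k => Cmul (delta j k) (f k)) = f j.
Proof. apply csum_delta'. Qed.

Lemma rsum_Cnorm2 n f : RtoC (rsum n (fun k => Cnorm2 (f k))) = csum n (fun k => Cmul (Cconj (f k)) (f k)).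
Proof. rewrite <- csum_RtoC. apply csum_ext; intros. rewrite Cnorm2_eq; auto. Qed.

Lemma RtoC_inj a b : RtoC a = RtoC b -> a = b.
Proof. intros H. apply (f_equal Re) in H. simpl in H. auto. Qed.

Lemma vnorm2_ip n x : RtoC (vnorm2 n x) = ip n x x.
Proof. unfold vnorm2, ip. apply rsum_Cnorm2. Qed.

Lemma ip_conj n x y : Cconj (ip n x y) = ip n y x.
Proof. unfold ip. rewrite csum_conj. apply csum_ext; intros.
  rewrite Cconj_mul, Cconj_conj; ring. Qed.

Lemma unitary_delta n U : unitary n U -> forall i j, (i < n)%nat -> (j < n)%nat ->
  csum n (fun k => Cmul (U i k) (Cconj (U j k))) = delta i j.
Proof. intros H i j Hi Hj. rewrite H; auto. Qed.

(* Q = I - U^* U is zero *)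
Lemma unitary_cols n U : unitary n U -> forall a b, (a < n)%nat -> (b < n)%nat ->
  ip n (col U a) (col U b) = delta a b.
Proof.
  intros HU.
  set (P := fun a b => ip n (col U a) (col U b)).
  assert (HP2 : forall a c, (a < n)%nat -> (c < n)%nat -> csum n (fun b => Cmul (P a b) (P b c)) = P a c).
  { intros a c Ha Hc. unfold P, ip, col.
    transitivity (csum n (fun b => csum n (fun i => csum n (fun j =>
       Cmul (Cmul (Cconj (U i a)) (U j c)) (Cmul (U i b) (Cconj (U j b))))))).
    { apply csum_ext; intros b Hb. rewrite csum_mul. apply csum_ext; intros i Hi.
      apply csum_ext; intros j Hj. ring. }
    transitivity (csum n (fun i => csum n (fun j =>
       Cmul (Cmul (Cconj (U i a)) (U j c)) (delta i j)))).
    { rewrite csum_swap. apply csum_ext; intros i Hi. rewrite csum_swap.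
      apply csum_ext; intros j Hj. rewrite csum_scal. rewrite unitary_delta; auto. }
    apply csum_ext; intros i Hi. rewrite <- (csum_delta_r n i (fun j => Cmul (Cconj (U i a)) (U j c))) by auto.
    apply csum_ext; intros; ring. }
  assert (Hh : forall a b, P b a = Cconj (P a b)).
  { intros; unfold P; rewrite ip_conj; auto. }
  set (Q := fun a b => Cadd (delta a b) (Copp (P a b))).
  assert (HQ2 : forall a c, (a < n)%nat -> (c < n)%nat -> csum n (fun b => Cmul (Q a b) (Q b c)) = Q a c).
  { intros a c Ha Hc. unfold Q.
    rewrite (csum_ext n _ (fun b => Cadd (Cadd (Cadd (Cmul (delta a b) (delta b c))
        (Copp (Cmul (delta a b) (P b c)))) (Copp (Cmul (delta b c) (P a b)))) (Cmul (P a b) (P b c))))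
      by (intros; ring).
    rewrite !csum_add, !csum_opp, HP2 by auto.
    rewrite csum_delta_r by auto. rewrite csum_delta_r by auto. rewrite csum_delta_l by auto.
    ring. }
  assert (HQh : forall a b, Q b a = Cconj (Q a b)).
  { intros; unfold Q. rewrite (Hh a b), delta_sym. unfold delta.
    destruct (Nat.eqb a b); rewrite ?Cconj_add, ?Cconj_opp, ?Cconj_RtoC, ?Cconj_C0; ring. }
  assert (HQd : forall a, (a < n)%nat -> RtoC (rsum n (fun b => Cnorm2 (Q a b))) = Q a a).
  { intros a Ha. rewrite <- HQ2 by auto. rewrite rsum_Cnorm2. apply csum_ext; intros b Hb.
    rewrite (HQh a b); ring. }
  assert (Htr : csum n (fun a => Q a a) = C0).
  { unfold Q. rewrite csum_add, csum_opp.
    rewrite (csum_ext n (fun a => delta a a) (fun _ => Cone)) by (intros; unfold delta; rewrite Nat.eqb_refl; auto).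
    unfold P, ip, col. rewrite csum_swap.
    rewrite (csum_ext n (fun i => csum n (fun a => Cmul (Cconj (U i a)) (U i a))) (fun _ => Cone)).
    ring.
    intros i Hi. transitivity (csum n (fun k => Cmul (U i k) (Cconj (U i k)))).
    apply csum_ext; intros; ring. rewrite HU by auto. rewrite Nat.eqb_refl; auto. }
  assert (HQ0 : forall a b, (a < n)%nat -> (b < n)%nat -> Q a b = C0).
  { assert (Hs : rsum n (fun a => rsum n (fun b => Cnorm2 (Q a b))) = 0).
    { apply RtoC_inj. rewrite <- csum_RtoC. rewrite (csum_ext n _ (fun a => Q a a)).
      rewrite Htr; auto. intros; apply HQd; auto. }
    intros a b Ha Hb. apply Cnorm2_zero.
    pose proof (rsum_zero_nonneg n _ (fun a _ => rsum_nonneg n _ (fun b _ => Cnorm2_nonneg (Q a b))) Hs a Ha) as H1.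
    exact (rsum_zero_nonneg n _ (fun b _ => Cnorm2_nonneg (Q a b)) H1 b Hb). }
  intros a b Ha Hb. pose proof (HQ0 a b Ha Hb). unfold Q in H. fold (P a b).
  transitivity (Cadd (P a b) (Cadd (delta a b) (Copp (P a b)))). rewrite H; ring. ring.
Qed.

Lemma cols_unitary n U : (forall a b, (a < n)%nat -> (b < n)%nat -> ip n (col U a) (col U b) = delta a b) ->
  unitary n U.
Proof.
  intros H. set (V := fun a i => Cconj (U i a)).
  assert (HV : unitary n V).
  { intros a b Ha Hb. change (if Nat.eqb a b then Cone else C0) with (delta a b). rewrite <- (H a b Ha Hb). unfold ip, col, V. apply csum_ext; intros.
    rewrite Cconj_conj; ring. }
  intros i j Hi Hj. pose proof (unitary_cols n V HV i j Hi Hj) as E.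
  unfold ip, col, V in E. change (if Nat.eqb i j then Cone else C0) with (delta i j). rewrite <- E. apply csum_ext; intros.
  rewrite Cconj_conj; ring.
Qed.

Lemma parseval n U v : unitary n U ->
  rsum n (fun k => Cnorm2 (ip n (col U k) v)) = vnorm2 n v.
Proof.
  intros HU. apply RtoC_inj. rewrite rsum_Cnorm2, vnorm2_ip.
  unfold ip, col.
  transitivity (csum n (fun k => csum n (fun i => csum n (fun j =>
     Cmul (Cmul (Cconj (v i)) (v j)) (Cmul (U i k) (Cconj (U j k))))))).
  { apply csum_ext; intros k Hk. rewrite csum_conj, csum_mul. apply csum_ext; intros i Hi.
    apply csum_ext; intros j Hj. rewrite Cconj_mul, Cconj_conj. ring. }
  rewrite csum_swap. apply csum_ext; intros i Hi. rewrite csum_swap.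
  transitivity (csum n (fun j => Cmul (delta i j) (Cmul (Cconj (v i)) (v j)))).
  { apply csum_ext; intros j Hj. rewrite csum_scal. rewrite unitary_delta; auto. ring. }
  rewrite csum_delta_r; auto.
Qed.

Lemma csum_swap_3 n f : csum n (fun i => csum n (fun j => csum n (fun k => f i j k))) =
  csum n (fun k => csum n (fun i => csum n (fun j => f i j k))).
Proof. transitivity (csum n (fun i => csum n (fun k => csum n (fun j => f i j k)))).
  apply csum_ext; intros; apply csum_swap. apply csum_swap. Qed.

Section Decomp.
Variables (n : nat) (M U : Mat) (lam : nat -> R).
Hypothesis HD : spectral_decomp n M U lam.

Lemma dec_unitary : unitary n U. Proof. apply HD. Qed.
Lemma dec_cols a b : (a < n)%nat -> (b < n)%nat -> ip n (col U a) (col U b) = delta a b.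
Proof. apply unitary_cols, dec_unitary. Qed.

Lemma dec_eigen k i : (k < n)%nat -> (i < n)%nat -> mv n M (col U k) i = Cmul (RtoC (lam k)) (U i k).
Proof.
  intros Hk Hi. unfold mv, col. destruct HD as [_ HM].
  transitivity (csum n (fun j => csum n (fun k' => Cmul (Cmul (U i k') (RtoC (lam k'))) (Cmul (Cconj (U j k')) (U j k))))).
  { apply csum_ext; intros j Hj. rewrite HM by auto. rewrite <- csum_scal_r. apply csum_ext; intros; ring. }
  rewrite csum_swap.
  transitivity (csum n (fun k' => Cmul (delta k' k) (Cmul (U i k') (RtoC (lam k'))))).
  { apply csum_ext; intros k' Hk'. rewrite csum_scal. rewrite <- (dec_cols k' k) by auto.
    unfold ip, col. ring. }
  rewrite csum_delta_l; auto. ring.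
Qed.

Lemma dec_quad_col k : (k < n)%nat -> quad n M (col U k) = lam k.
Proof.
  intros Hk. unfold quad.
  transitivity (Re (Cmul (RtoC (lam k)) (ip n (col U k) (col U k)))).
  { f_equal. unfold ip. rewrite <- csum_scal. apply csum_ext; intros i Hi.
    rewrite dec_eigen by auto. unfold col; ring. }
  rewrite dec_cols by auto. unfold delta; rewrite Nat.eqb_refl. simpl; ring.
Qed.

Lemma dec_nonneg k : psd n M -> (k < n)%nat -> 0 <= lam k.
Proof. intros Hp Hk. rewrite <- dec_quad_col by auto. apply Hp. Qed.

Lemma dec_quad v : quad n M v = rsum n (fun k => lam k * Cnorm2 (ip n (col U k) v)).
Proof.
  unfold quad.
  assert (E : ip n v (mv n M v) = csum n (fun k => Cmul (RtoC (lam k)) (Cmul (Cconj (ip n (col U k) v)) (ip n (col U k) v)))).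
  { unfold ip, mv, col. destruct HD as [_ HM].
    transitivity (csum n (fun i => csum n (fun j => csum n (fun k =>
      Cmul (RtoC (lam k)) (Cmul (Cmul (Cconj (v i)) (U i k)) (Cmul (Cconj (U j k)) (v j))))))).
    { apply csum_ext; intros i Hi. rewrite <- csum_scal. apply csum_ext; intros j Hj.
      rewrite HM by auto. rewrite <- csum_scal_r, <- csum_scal. apply csum_ext; intros; ring. }
    rewrite csum_swap_3. apply csum_ext; intros k Hk. rewrite csum_conj, csum_mul, <- csum_scal.
    apply csum_ext; intros i Hi. rewrite <- csum_scal. apply csum_ext; intros j Hj.
    rewrite Cconj_mul, Cconj_conj. ring. }
  rewrite E, Re_csum. apply rsum_ext; intros. rewrite Cnorm2_eq. simpl; ring.
Qed.

Lemma dec_trace : rsum n (fun i => Re (M i i)) = rsum n lam.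
Proof.
  destruct HD as [_ HM].
  transitivity (rsum n (fun i => Re (csum n (fun k => Cmul (RtoC (lam k)) (Cmul (Cconj (U i k)) (U i k)))))).
  { apply rsum_ext; intros. rewrite HM by auto. f_equal. apply csum_ext; intros; ring. }
  rewrite <- Re_csum. rewrite csum_swap. rewrite Re_csum. apply rsum_ext; intros k Hk.
  rewrite csum_scal. pose proof (dec_cols k k Hk Hk) as E. unfold ip, col in E. rewrite E.
  unfold delta; rewrite Nat.eqb_refl. simpl; ring.
Qed.
End Decomp.

Definition ent (x : R) : R := - xlog2x x.
Definition L0 (x : R) : R := if Req_EM_T x 0 then 0 else ln x.

Lemma ln2_pos : 0 < ln 2.
Proof. rewrite <- ln_1. apply ln_increasing; lra. Qed.

Lemma ent_L0 x : ent x = - (x * L0 x) / ln 2.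
Proof. pose proof ln2_pos. unfold ent, xlog2x, L0, log2. destruct (Req_EM_T x 0).
  subst; field; lra. field; lra. Qed.

Lemma ent_0 : ent 0 = 0.
Proof. unfold ent, xlog2x. destruct (Req_EM_T 0 0); [lra|congruence]. Qed.

Lemma ln_le_sub1 t : 0 < t -> ln t <= t - 1.
Proof. intros. pose proof (exp_ineq1_le (ln t)). rewrite exp_ln in H0; lra. Qed.

Lemma term_ineq T r c : 0 <= T -> T <= r -> T <= c ->
  T * (L0 c - L0 r) >= T - T * r / c.
Proof.
  intros HT Hr Hc. destruct HT as [HT|HT].
  - unfold L0. destruct (Req_EM_T c 0); [lra|]. destruct (Req_EM_T r 0); [lra|].
    assert (0 < r / c) by (apply Rdiv_lt_0_compat; lra).
    pose proof (ln_le_sub1 _ H). unfold Rdiv in H0; rewrite ln_mult, ln_Rinv in H0 by (try apply Rinv_0_lt_compat; lra).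
    assert (T * (r / c - 1) >= T * (ln r - ln c)) by (apply Rle_ge, Rmult_le_compat_l; lra).
    unfold Rdiv in *. nra.
  - subst. lra.
Qed.

Lemma lemmaG K N (T : nat -> nat -> R) : (forall k n, (k < K)%nat -> (n < N)%nat -> 0 <= T k n) ->
  let r := fun k => rsum N (fun n => T k n) in
  let c := fun n => rsum K (fun k => T k n) in
  rsum K (fun k => ent (r k)) >= rsum N (fun n => ent (c n)) +
    rsum K (fun k => rsum N (fun n => T k n - T k n * r k / c n)) / ln 2.
Proof.
  intros HT r c. pose proof ln2_pos.
  assert (E1 : rsum K (fun k => ent (r k)) = - rsum K (fun k => rsum N (fun n => T k n * L0 (r k))) / ln 2).
  { unfold Rdiv. rewrite <- rsum_opp. rewrite Rmult_comm, <- rsum_scal. apply rsum_ext; intros.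
    rewrite ent_L0. unfold r at 1. rewrite Rmult_comm, <- rsum_scal.
    rewrite (rsum_ext N (fun k0 => L0 (r k) * T k k0) (fun n => T k n * L0 (r k))) by (intros; ring).
    field; lra. }
  assert (E2 : rsum N (fun n => ent (c n)) = - rsum K (fun k => rsum N (fun n => T k n * L0 (c n))) / ln 2).
  { rewrite rsum_swap. unfold Rdiv. rewrite <- rsum_opp. rewrite Rmult_comm, <- rsum_scal. apply rsum_ext; intros.
    rewrite ent_L0. unfold c at 1. rewrite Rmult_comm, <- rsum_scal.
    rewrite (rsum_ext K (fun k0 => L0 (c k) * T k0 k) (fun n => T n k * L0 (c k))) by (intros; ring).
    field; lra. }
  rewrite E1, E2.
  assert (rsum K (fun k => rsum N (fun n => T k n - T k n * r k / c n)) <=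
          rsum K (fun k => rsum N (fun n => T k n * L0 (c n))) - rsum K (fun k => rsum N (fun n => T k n * L0 (r k)))).
  { rewrite Rminus_def, <- rsum_opp, <- rsum_add. apply rsum_le; intros k Hk.
    rewrite <- rsum_opp, <- rsum_add. apply rsum_le; intros n Hn.
    assert (T k n <= r k) by (unfold r; apply (rsum_term_le N (fun n => T k n)); auto).
    assert (T k n <= c n) by (unfold c; apply (rsum_term_le K (fun k => T k n)); auto).
    pose proof (term_ineq (T k n) (r k) (c n) (HT k n Hk Hn) H0 H1). lra. }
  apply Rle_ge. unfold Rdiv. apply Rmult_le_reg_r with (ln 2); auto.
  rewrite Rmult_plus_distr_r, !Rmult_assoc, !Rinv_l by lra. lra.
Qed.

Definition Hs n (f : nat -> R) := rsum n (fun k => ent (f k)).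

Lemma S_min n M U lam V : psd n M -> spectral_decomp n M U lam -> unitary n V ->
  Hs n lam <= rsum n (fun j => ent (quad n M (col V j))).
Proof.
  intros Hp HD HV. pose proof ln2_pos.
  set (D := fun j k => Cnorm2 (ip n (col U k) (col V j))).
  set (T := fun j k => lam k * D j k).
  assert (HT : forall j k, (j < n)%nat -> (k < n)%nat -> 0 <= T j k).
  { intros; unfold T, D. apply Rmult_le_pos. eapply dec_nonneg; eauto. apply Cnorm2_nonneg. }
  pose proof (lemmaG n n T HT) as G. simpl in G.
  assert (Hr : forall j, (j < n)%nat -> rsum n (fun k => T j k) = quad n M (col V j)).
  { intros. rewrite (dec_quad n M U lam HD). apply rsum_ext; intros; auto. }
  assert (HDc : forall k, (k < n)%nat -> rsum n (fun j => D j k) = 1).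
  { intros k Hk. unfold D. rewrite (rsum_ext n _ (fun j => Cnorm2 (ip n (col V j) (col U k)))).
    rewrite parseval by auto. apply RtoC_inj. rewrite vnorm2_ip. erewrite dec_cols; eauto.
    unfold delta; rewrite Nat.eqb_refl; auto.
    intros. rewrite <- ip_conj, Cnorm2_conj; auto. }
  assert (HDr : forall j, (j < n)%nat -> rsum n (fun k => D j k) = 1).
  { intros j Hj. unfold D. erewrite parseval by (eapply dec_unitary; eauto).
    apply RtoC_inj. rewrite vnorm2_ip. rewrite unitary_cols by auto.
    unfold delta; rewrite Nat.eqb_refl; auto. }
  assert (Hc : forall k, (k < n)%nat -> rsum n (fun j => T j k) = lam k).
  { intros. unfold T. rewrite rsum_scal, HDc; auto; ring. }
  rewrite (rsum_ext n (fun k => ent (rsum n (fun j => T j k))) (fun k => ent (lam k))) in G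
    by (intros; rewrite Hc; auto).
  rewrite (rsum_ext n (fun k => ent (rsum n (fun n0 => T k n0))) (fun j => ent (quad n M (col V j)))) in G
    by (intros; rewrite Hr; auto).
  assert (0 <= rsum n (fun k => rsum n (fun n0 => T k n0 - T k n0 * rsum n (fun n1 => T k n1) / rsum n (fun k0 => T k0 n0)))).
  { transitivity (rsum n (fun j => rsum n (fun k => T j k - D j k * quad n M (col V j)))).
    - rewrite (rsum_ext n _ (fun j => quad n M (col V j) - quad n M (col V j) * rsum n (fun k => D j k))).
      + rewrite (rsum_ext n (fun j => quad n M (col V j) - quad n M (col V j) * rsum n (fun k => D j k)) (fun _ => 0)).
        rewrite rsum_0; lra. intros; rewrite HDr; auto; ring.
      + intros j Hj. rewrite (rsum_ext n (fun k => T j k - D j k * quad n M (col V j))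
          (fun k => T j k + (- quad n M (col V j)) * D j k)) by (intros; ring).
        rewrite rsum_add, rsum_scal, Hr by auto. unfold D; ring.
    - apply rsum_le; intros j Hj. apply rsum_le; intros k Hk.
      rewrite Hr, Hc by auto. unfold T.
      assert (0 <= quad n M (col V j)) by apply Hp.
      assert (0 <= D j k) by apply Cnorm2_nonneg.
      destruct (Req_EM_T (lam k) 0). rewrite e. unfold Rdiv; rewrite Rinv_0. nra.
      unfold Rdiv. replace (lam k * D j k * quad n M (col V j) * / lam k) with (D j k * quad n M (col V j)).
      lra. field; auto. }
  unfold Hs. assert (0 <= (rsum n (fun k => rsum n (fun n0 => T k n0 - T k n0 * rsum n (fun n1 => T k n1) / rsum n (fun k0 => T k0 n0)))) / ln 2).
  { unfold Rdiv. apply Rmult_le_pos; auto. left; apply Rinv_0_lt_compat; auto. }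
  lra.
Qed.

Lemma vN_dec n M U lam : psd n M -> spectral_decomp n M U lam -> vN_entropy n M = Hs n lam.
Proof.
  intros Hp HD. unfold vN_entropy.
  destruct (epsilon_spec (inhabits 0) (fun s => exists U lam, spectral_decomp n M U lam /\ s = - rsum n (fun k => xlog2x (lam k))))
    as [U' [lam' [HD' E]]].
  { exists (- rsum n (fun k => xlog2x (lam k))), U, lam; auto. }
  rewrite E. fold (Hs n lam').
  assert (Hs n lam <= Hs n lam').
  { eapply Rle_trans. apply (S_min n M U lam U'); auto. eapply dec_unitary; eauto.
    unfold Hs; right; apply rsum_ext; intros. erewrite dec_quad_col; eauto. }
  assert (Hs n lam' <= Hs n lam).
  { eapply Rle_trans. apply (S_min n M U' lam' U); auto. eapply dec_unitary; eauto.
    unfold Hs; right; apply rsum_ext; intros. erewrite dec_quad_col; eauto. }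
  unfold Hs in *. rewrite <- rsum_opp. apply Rle_antisym; auto.
Qed.

Lemma csum_S n f : csum (S n) f = Cadd (csum n f) (f n). Proof. reflexivity. Qed.
Lemma rsum_S n f : rsum (S n) f = rsum n f + f n. Proof. reflexivity. Qed.

Definition upd (y : nat -> Cx) d s : nat -> Cx := fun i => if Nat.eqb i d then s else y i.

Lemma vnorm2_ext n x y : (forall i, (i < n)%nat -> x i = y i) -> vnorm2 n x = vnorm2 n y.
Proof. intros; unfold vnorm2; apply rsum_ext; intros; rewrite H; auto. Qed.
Lemma mv_ext n M x y : (forall i, (i < n)%nat -> x i = y i) -> forall i, mv n M x i = mv n M y i.
Proof. intros; unfold mv; apply csum_ext; intros; rewrite H; auto. Qed.
Lemma ip_ext n x y x' y' : (forall i, (i < n)%nat -> x i = x' i) -> (forall i, (i < n)%nat -> y i = y' i) ->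
  ip n x y = ip n x' y'.
Proof. intros; unfold ip; apply csum_ext; intros; rewrite H, H0; auto. Qed.
Lemma quad_ext n M x y : (forall i, (i < n)%nat -> x i = y i) -> quad n M x = quad n M y.
Proof. intros; unfold quad; f_equal. apply ip_ext; auto. intros; apply mv_ext; auto. Qed.
Lemma upd_lt y d s i : (i < d)%nat -> upd y d s i = y i.
Proof. intros; unfold upd; destruct (Nat.eqb_spec i d); [lia|auto]. Qed.
Lemma upd_eq y d s : upd y d s d = s.
Proof. unfold upd; rewrite Nat.eqb_refl; auto. Qed.

Lemma vnorm2_nonneg n x : 0 <= vnorm2 n x.
Proof. apply rsum_nonneg; intros; apply Cnorm2_nonneg. Qed.

Definition rowb d (N : Mat) (x : nat -> Cx) := csum d (fun j => Cmul (N d j) (x j)).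

Lemma herm_diag_real n N i : herm n N -> (i < n)%nat -> N i i = RtoC (Re (N i i)).
Proof. intros H Hi. pose proof (H i i Hi Hi). apply Cx_eq; simpl; auto.
  destruct (N i i) as [a b]; simpl in *. injection H0; intros; lra. Qed.

Lemma quad_S d N x : herm (S d) N ->
  quad (S d) N x = quad d N x + 2 * Re (Cmul (Cconj (x d)) (rowb d N x)) + Re (N d d) * Cnorm2 (x d).
Proof.
  intros H. unfold quad, ip, mv. rewrite csum_S.
  rewrite (csum_ext d (fun i => Cmul (Cconj (x i)) (csum (S d) (fun j => Cmul (N i j) (x j))))
     (fun i => Cadd (Cmul (Cconj (x i)) (csum d (fun j => Cmul (N i j) (x j)))) (Cmul (Cconj (x i)) (Cmul (N i d) (x d)))))
     by (intros; rewrite csum_S; ring).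
  rewrite csum_add, csum_S.
  assert (E : csum d (fun i => Cmul (Cconj (x i)) (Cmul (N i d) (x d))) = Cconj (Cmul (Cconj (x d)) (rowb d N x))).
  { unfold rowb. rewrite Cconj_mul, Cconj_conj, csum_conj, <- csum_scal. apply csum_ext; intros.
    rewrite H by lia. rewrite Cconj_mul. ring. }
  rewrite E. rewrite (herm_diag_real (S d) N d H) by lia. unfold rowb.
  generalize (csum d (fun k => Cmul (Cconj (x k)) (csum d (fun j => Cmul (N k j) (x j))))) as P.
  generalize (csum d (fun j => Cmul (N d j) (x j))) as B. generalize (x d) as xd. generalize (Re (N d d)) as r.
  intros r [] [] []; unfold Cnorm2; simpl; ring.
Qed.

Lemma quad_zero n M : quad n M (fun _ => C0) = 0.
Proof. unfold quad, ip. rewrite (csum_ext n _ (fun _ => C0)) by (intros; rewrite Cconj_C0; ring).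
  rewrite csum_0; reflexivity. Qed.
Lemma rowb_zero d N : rowb d N (fun _ => C0) = C0.
Proof. unfold rowb. rewrite (csum_ext d _ (fun _ => C0)) by (intros; ring). apply csum_0. Qed.

Lemma lemmaK d : forall N, herm d N -> psd d N ->
  (forall eps, 0 < eps -> exists x, quad d N x < eps * vnorm2 d x) ->
  exists x, 0 < vnorm2 d x /\ forall i, (i < d)%nat -> mv d N x i = C0.
Proof.
  induction d as [|d IH]; intros N Hh Hp Hinf.
  - destruct (Hinf 1 ltac:(lra)) as [x Hx]. unfold quad, ip, vnorm2 in Hx; simpl in Hx. lra.
  - set (a := Re (N d d)).
    assert (HhN : herm d N) by (intros i j Hi Hj; apply Hh; lia).
    assert (HQ : forall y s, quad (S d) N (upd y d s) = quad d N y + 2 * Re (Cmul (Cconj s) (rowb d N y)) + a * Cnorm2 s).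
    { intros. rewrite quad_S by auto. rewrite upd_eq.
      rewrite (quad_ext d N (upd y d s) y) by (intros; apply upd_lt; auto).
      unfold rowb. rewrite (csum_ext d (fun j => Cmul (N d j) (upd y d s j)) (fun j => Cmul (N d j) (y j)))
        by (intros; rewrite upd_lt; auto). auto. }
    assert (Ha : 0 <= a).
    { pose proof (Hp (upd (fun _ => C0) d Cone)). rewrite HQ in H.
      rewrite quad_zero, rowb_zero in H. unfold Cnorm2 in H. simpl in H. lra. }
    destruct Ha as [Ha|Ha0].
    + (* Schur complement *)
      set (Sc := fun i j => Cadd (N i j) (Copp (Cmul (Cmul (N i d) (N d j)) (RtoC (/ a))))).
      assert (HSh : herm d Sc).
      { intros i j Hi Hj. unfold Sc. rewrite HhN by auto. rewrite (Hh i d), (Hh d j) by lia.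
        rewrite Cconj_add, Cconj_opp, !Cconj_mul, Cconj_RtoC. ring. }
      assert (HSQ : forall y, quad d Sc y = quad d N y - Cnorm2 (rowb d N y) / a).
      { intros y. unfold quad.
        assert (E : ip d y (mv d Sc y) = Cadd (ip d y (mv d N y)) (Copp (Cmul (Cmul (Cconj (rowb d N y)) (rowb d N y)) (RtoC (/ a))))).
        { unfold ip, mv, Sc, rowb.
          rewrite (csum_ext d _ (fun i => Cadd (Cmul (Cconj (y i)) (csum d (fun j => Cmul (N i j) (y j))))
             (Copp (Cmul (Cmul (Cconj (y i)) (N i d)) (Cmul (csum d (fun j => Cmul (N d j) (y j))) (RtoC (/ a))))))).
          2:{ intros i Hi. rewrite (csum_ext d _ (fun j => Cadd (Cmul (N i j) (y j)) (Copp (Cmul (Cmul (N i d) (RtoC (/a))) (Cmul (N d j) (y j)))))) by (intros; ring).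
              rewrite csum_add, csum_opp, csum_scal. ring. }
          rewrite csum_add, csum_opp. f_equal. f_equal.
          rewrite csum_scal_r.
          assert (EB : csum d (fun i => Cmul (Cconj (y i)) (N i d)) = Cconj (csum d (fun j => Cmul (N d j) (y j)))).
          { rewrite csum_conj. apply csum_ext; intros. rewrite Cconj_mul, (Hh d) by lia. ring. }
          rewrite EB. ring. }
        rewrite E. rewrite Cnorm2_eq. simpl. field. lra. }
      assert (HQS : forall y s, quad (S d) N (upd y d s) = quad d Sc y + a * Cnorm2 (Cadd s (Cmul (rowb d N y) (RtoC (/ a))))).
      { intros. rewrite HQ, HSQ. unfold Cnorm2. simpl. field. lra. }
      assert (HSp : psd d Sc).
      { intros y. pose proof (Hp (upd y d (Copp (Cmul (rowb d N y) (RtoC (/ a)))))). rewrite HQS in H.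
        replace (Cadd (Copp (Cmul (rowb d N y) (RtoC (/ a)))) (Cmul (rowb d N y) (RtoC (/ a)))) with C0 in H by ring.
        unfold Cnorm2 in H; simpl in H. lra. }
      set (K0 := rsum d (fun j => Cnorm2 (N d j))).
      assert (HK0 : 0 <= K0) by (apply rsum_nonneg; intros; apply Cnorm2_nonneg).
      assert (Hb : forall y, Cnorm2 (rowb d N y) <= 2 ^ d * K0 * vnorm2 d y).
      { intros y. unfold rowb. eapply Rle_trans. apply rsum_pow2.
        rewrite Rmult_assoc. apply Rmult_le_compat_l. apply pow_le; lra.
        unfold vnorm2. rewrite <- rsum_scal. apply rsum_le; intros j Hj.
        rewrite Cnorm2_mul. apply Rmult_le_compat_r. apply Cnorm2_nonneg.
        apply (rsum_term_le d (fun j => Cnorm2 (N d j))); auto. intros; apply Cnorm2_nonneg. }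
      set (C1 := 1 + 2 * (2 ^ d * K0) / (a * a)).
      assert (HC1 : 1 <= C1).
      { unfold C1. assert (0 <= 2 * (2 ^ d * K0) / (a * a)).
        { unfold Rdiv. apply Rmult_le_pos. apply Rmult_le_pos; [lra|]. apply Rmult_le_pos; auto. apply pow_le; lra.
          left; apply Rinv_0_lt_compat; nra. }
        lra. }
      destruct (IH Sc HSh HSp) as [y [Hy1 Hy2]].
      { intros eps Heps.
        set (e' := Rmin (a / 4) (eps / (2 * C1))).
        assert (He'1 : e' <= a / 4) by apply Rmin_l.
        assert (He'2 : e' <= eps / (2 * C1)) by apply Rmin_r.
        assert (He' : 0 < e') by (apply Rmin_pos; [lra|apply Rdiv_lt_0_compat; lra]).
        destruct (Hinf e' He') as [x Hx].
        exists x.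
        set (y := x). set (s := x d).
        assert (Exy : forall i, (i < S d)%nat -> x i = upd y d s i).
        { intros i Hi. unfold upd, s, y. destruct (Nat.eqb_spec i d); subst; auto. }
        rewrite (quad_ext _ N x (upd y d s) Exy) in Hx. rewrite (vnorm2_ext _ x (upd y d s) Exy) in Hx.
        rewrite HQS in Hx.
        unfold vnorm2 in Hx. rewrite rsum_S in Hx. rewrite upd_eq in Hx.
        rewrite (rsum_ext d (fun i => Cnorm2 (upd y d s i)) (fun i => Cnorm2 (y i))) in Hx by (intros; rewrite upd_lt; auto).
        fold (vnorm2 d y) in Hx.
        set (z := Cadd s (Cmul (rowb d N y) (RtoC (/ a)))) in *.
        assert (Hs : Cnorm2 s <= 2 * Cnorm2 z + 2 * (Cnorm2 (rowb d N y) / (a * a))).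
        { replace s with (Cadd z (Copp (Cmul (rowb d N y) (RtoC (/ a))))) by (unfold z; ring).
          eapply Rle_trans. apply Cnorm2_add_le.
          replace (Cnorm2 (Copp (Cmul (rowb d N y) (RtoC (/ a))))) with (Cnorm2 (rowb d N y) / (a * a)).
          replace (Cadd (Cadd z (Copp (Cmul (rowb d N y) (RtoC (/ a))))) (Cmul (rowb d N y) (RtoC (/ a)))) with z by ring.
          lra. unfold Cnorm2; simpl. field. lra. }
        pose proof (Hb y).
        assert (Hrb : Cnorm2 (rowb d N y) / (a * a) <= (2 ^ d * K0) / (a * a) * vnorm2 d y).
        { unfold Rdiv. replace (2 ^ d * K0 * / (a * a) * vnorm2 d y) with (2 ^ d * K0 * vnorm2 d y * / (a * a)) by ring.
          apply Rmult_le_compat_r. left; apply Rinv_0_lt_compat; nra. lra. }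
        pose proof (HSp y). pose proof (Cnorm2_nonneg z). pose proof (vnorm2_nonneg d y).
        set (Q := quad d Sc y) in *. set (Z := Cnorm2 z) in *. set (Y := vnorm2 d y) in *.
        assert (Hxx : Cnorm2 s <= 2 * Z + 2 * (2 ^ d * K0 / (a * a)) * Y) by lra.
        assert (HC1' : 2 * (2 ^ d * K0 / (a * a)) = C1 - 1) by (unfold C1; field; lra).
        assert (Htot : Q + a * Z < e' * (C1 * Y + 2 * Z)) by nra.
        assert (e' * 2 * Z <= a * Z / 2) by nra.
        assert (Q < 2 * e' * C1 * Y) by nra.
        assert (2 * e' * C1 * Y <= eps * Y).
        { apply Rmult_le_compat_r; auto. assert (e' * (2 * C1) <= eps).
          { replace eps with (eps / (2 * C1) * (2 * C1)) by (field; lra). apply Rmult_le_compat_r; lra. }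
          lra. }
        lra. }
      exists (upd y d (Copp (Cmul (rowb d N y) (RtoC (/ a))))). split.
      * unfold vnorm2. rewrite rsum_S. rewrite (rsum_ext d _ (fun i => Cnorm2 (y i))) by (intros; rewrite upd_lt; auto).
        fold (vnorm2 d y). pose proof (Cnorm2_nonneg (upd y d (Copp (Cmul (rowb d N y) (RtoC (/ a)))) d)). lra.
      * intros i Hi. unfold mv. rewrite csum_S. rewrite upd_eq.
        rewrite (csum_ext d (fun j => Cmul (N i j) (upd y d _ j)) (fun j => Cmul (N i j) (y j))) by (intros; rewrite upd_lt; auto).
        destruct (Nat.eq_dec i d).
        -- subst i. rewrite (herm_diag_real (S d) N d Hh) by lia. fold a. fold (rowb d N y).
           apply Cx_eq; simpl; field; lra.
        -- assert (Hi' : (i < d)%nat) by lia. pose proof (Hy2 i Hi') as E. unfold mv, Sc in E.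
           transitivity (csum d (fun j => Cmul (Sc i j) (y j))); [| exact E]. unfold Sc.
           rewrite (csum_ext d (fun j => Cmul (Cadd (N i j) (Copp (Cmul (Cmul (N i d) (N d j)) (RtoC (/ a))))) (y j)) (fun j => Cadd (Cmul (N i j) (y j)) (Copp (Cmul (Cmul (N i d) (RtoC (/a))) (Cmul (N d j) (y j)))))) by (intros; ring).
           rewrite csum_add, csum_opp, csum_scal. unfold rowb. ring.
    +
      assert (Hrow : forall y, rowb d N y = C0).
      { intros y. apply Cnorm2_zero. destruct (Cnorm2_nonneg (rowb d N y)) as [Hpos|]; auto.
        set (t := - (quad d N y + 1) / (2 * Cnorm2 (rowb d N y))).
        pose proof (Hp (upd y d (Cmul (RtoC t) (rowb d N y)))). rewrite HQ, <- Ha0 in H.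
        assert (Re (Cmul (Cconj (Cmul (RtoC t) (rowb d N y))) (rowb d N y)) = t * Cnorm2 (rowb d N y)).
        { unfold Cnorm2; simpl; ring. }
        rewrite H0 in H. unfold t in H. assert (2 * (- (quad d N y + 1) / (2 * Cnorm2 (rowb d N y)) * Cnorm2 (rowb d N y)) = - (quad d N y + 1)).
        { field. lra. }
        lra. }
      exists (upd (fun _ => C0) d Cone). split.
      * unfold vnorm2. rewrite rsum_S, upd_eq. pose proof (vnorm2_nonneg d (upd (fun _ => C0) d Cone)).
        unfold vnorm2 in H. unfold Cnorm2 at 2; simpl. lra.
      * intros i Hi. unfold mv. rewrite csum_S, upd_eq.
        rewrite (csum_ext d (fun j => Cmul (N i j) (upd _ d _ j)) (fun _ => C0)) by (intros; rewrite upd_lt; auto; ring).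
        rewrite csum_0. destruct (Nat.eq_dec i d).
        -- subst. rewrite (herm_diag_real (S d) N d Hh) by lia. fold a. rewrite <- Ha0. apply Cx_eq; simpl; ring.
        -- assert (Hi' : (i < d)%nat) by lia. rewrite Hh by lia.
           pose proof (Hrow (upd (fun _ => C0) i Cone)). unfold rowb in H.
           rewrite (csum_ext d _ (fun j => Cmul (if Nat.eqb j i then Cone else C0) (N d j))) in H.
           rewrite csum_delta in H by auto. rewrite H, Cconj_C0. ring.
           intros j Hj. unfold upd. destruct (Nat.eqb j i); ring.
Qed.

Definition mm n (A B : Mat) : Mat := fun i j => csum n (fun k => Cmul (A i k) (B k j)).
Definition ev (i : nat) : nat -> Cx := fun j => delta j i.

Lemma mv_mm n A B x i : mv n (mm n A B) x i = mv n A (mv n B x) i.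
Proof.
  unfold mv, mm. rewrite (csum_ext n _ (fun j => csum n (fun k => Cmul (A i k) (Cmul (B k j) (x j))))).
  rewrite csum_swap. apply csum_ext; intros. rewrite <- csum_scal. auto.
  intros. rewrite <- csum_scal_r. apply csum_ext; intros; ring.
Qed.

Lemma ip_herm n A x y : herm n A -> ip n (mv n A x) y = ip n x (mv n A y).
Proof.
  intros H. unfold ip, mv.
  rewrite (csum_ext n _ (fun i => csum n (fun j => Cmul (Cmul (Cconj (x j)) (A j i)) (y i)))).
  rewrite csum_swap. apply csum_ext; intros. rewrite <- csum_scal. apply csum_ext; intros; ring.
  intros i Hi. rewrite csum_conj, <- csum_scal_r. apply csum_ext; intros j Hj.
  rewrite Cconj_mul, (H j i), Cconj_conj by auto. ring.
Qed.

Lemma quad_sum n A x : quad n A x = rsum n (fun i => rsum n (fun j => Re (Cmul (Cmul (Cconj (x i)) (A i j)) (x j)))).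
Proof. unfold quad, ip, mv. rewrite Re_csum. apply rsum_ext; intros. rewrite <- csum_scal, Re_csum.
  apply rsum_ext; intros. f_equal; ring. Qed.

Lemma quad_mat_ext n A B x : (forall i j, (i < n)%nat -> (j < n)%nat -> A i j = B i j) -> quad n A x = quad n B x.
Proof. intros. rewrite !quad_sum. apply rsum_ext; intros. apply rsum_ext; intros. rewrite H; auto. Qed.

Lemma quad_comb n A B s t x : quad n (fun i j => Cadd (Cmul (RtoC s) (A i j)) (Cmul (RtoC t) (B i j))) x =
  s * quad n A x + t * quad n B x.
Proof. rewrite !quad_sum. rewrite <- !rsum_scal, <- rsum_add. apply rsum_ext; intros i Hi.
  rewrite <- !rsum_scal, <- rsum_add. apply rsum_ext; intros j Hj. destruct (x i), (x j), (A i j), (B i j); simpl; ring. Qed.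

Lemma quad_id n x : quad n (fun i j => delta i j) x = vnorm2 n x.
Proof. unfold quad, vnorm2. rewrite <- (Re_RtoC (rsum n _)). rewrite rsum_Cnorm2. f_equal.
  unfold ip, mv. apply csum_ext; intros. f_equal. rewrite csum_delta_r; auto. Qed.

Lemma vnorm2_term n x i : (i < n)%nat -> Cnorm2 (x i) <= vnorm2 n x.
Proof. intros. apply (rsum_term_le n (fun i => Cnorm2 (x i))); auto. intros; apply Cnorm2_nonneg. Qed.

Definition Kb n (A : Mat) := rsum n (fun i => rsum n (fun j => Cnorm2 (A i j) + 1)).

Lemma term_bound a m b V : Cnorm2 a <= V -> Cnorm2 b <= V ->
  Rabs (Re (Cmul (Cmul (Cconj a) m) b)) <= (Cnorm2 m + 1) * V.
Proof.
  intros Ha Hb. pose proof (Re_bound (Cmul (Cconj a) m) b).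
  pose proof (Re_bound (Copp (Cmul (Cconj a) m)) b).
  assert (E : Re (Cmul (Copp (Cmul (Cconj a) m)) b) = - Re (Cmul (Cmul (Cconj a) m) b)) by (simpl; ring).
  assert (E2 : Cnorm2 (Copp (Cmul (Cconj a) m)) = Cnorm2 a * Cnorm2 m).
  { unfold Cnorm2; simpl; ring. }
  rewrite E, E2 in H0. rewrite Cnorm2_mul, Cnorm2_conj in H.
  pose proof (Cnorm2_nonneg m). pose proof (Cnorm2_nonneg a).
  assert (Cnorm2 a * Cnorm2 m <= V * Cnorm2 m) by (apply Rmult_le_compat_r; auto).
  apply Rabs_le. split; nra.
Qed.

Lemma quad_bound n A x : Rabs (quad n A x) <= Kb n A * vnorm2 n x.
Proof.
  rewrite quad_sum. unfold Kb. rewrite Rmult_comm, <- rsum_scal.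
  assert (Habs : forall m (f : nat -> R), Rabs (rsum m f) <= rsum m (fun i => Rabs (f i))).
  { induction m; intros; simpl. rewrite Rabs_R0; lra. eapply Rle_trans. apply Rabs_triang.
    specialize (IHm f). lra. }
  eapply Rle_trans. apply Habs. apply rsum_le; intros i Hi.
  rewrite <- rsum_scal. eapply Rle_trans. apply Habs. apply rsum_le; intros j Hj.
  rewrite Rmult_comm. apply term_bound; apply vnorm2_term; auto.
Qed.

Lemma Kb_nonneg n A : 0 <= Kb n A.
Proof. unfold Kb. apply rsum_nonneg; intros. apply rsum_nonneg; intros. pose proof (Cnorm2_nonneg (A k k0)); lra. Qed.

Lemma ip_add_r n x y z : ip n x (fun i => Cadd (y i) (z i)) = Cadd (ip n x y) (ip n x z).
Proof. unfold ip. rewrite <- csum_add. apply csum_ext; intros; ring. Qed.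
Lemma ip_opp_r n x y : ip n x (fun i => Copp (y i)) = Copp (ip n x y).
Proof. unfold ip. rewrite <- csum_opp. apply csum_ext; intros; ring. Qed.
Lemma ip_scal_r n x y c : ip n x (fun i => Cmul (y i) c) = Cmul (ip n x y) c.
Proof. unfold ip. rewrite <- csum_scal_r. apply csum_ext; intros; ring. Qed.
Lemma ip_sum_r n r x (F : nat -> nat -> Cx) c :
  ip n x (fun i => csum r (fun a => Cmul (F a i) (c a))) = csum r (fun a => Cmul (ip n x (F a)) (c a)).
Proof. unfold ip. rewrite (csum_ext n _ (fun i => csum r (fun a => Cmul (Cmul (Cconj (x i)) (F a i)) (c a)))).
  rewrite csum_swap. apply csum_ext; intros. rewrite csum_scal_r; auto.
  intros. rewrite <- csum_scal. apply csum_ext; intros; ring. Qed.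
Lemma ip_swap_conj n x y : ip n x y = Cconj (ip n y x).
Proof. rewrite ip_conj; auto. Qed.

Section Proj.
Variables (n r : nat) (F : nat -> nat -> Cx).
Definition ON := forall a b, (a < r)%nat -> (b < r)%nat -> ip n (F a) (F b) = delta a b.
Definition Pm : Mat := fun i j => Cadd (delta i j) (Copp (csum r (fun a => Cmul (F a i) (Cconj (F a j))))).
Definition projv (x : nat -> Cx) : nat -> Cx := fun i => Cadd (x i) (Copp (csum r (fun a => Cmul (F a i) (ip n (F a) x)))).

Lemma mv_Pm x i : (i < n)%nat -> mv n Pm x i = projv x i.
Proof.
  intros Hi. unfold mv, Pm, projv.
  rewrite (csum_ext n _ (fun j => Cadd (Cmul (delta i j) (x j)) (Copp (csum r (fun a => Cmul (F a i) (Cmul (Cconj (F a j)) (x j))))))).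
  rewrite csum_add, csum_opp, csum_delta_r by auto. f_equal. f_equal.
  rewrite csum_swap. apply csum_ext; intros. unfold ip. rewrite csum_scal; auto.
  intros. rewrite (csum_ext r (fun a => Cmul (F a i) (Cmul (Cconj (F a k)) (x k))) (fun a => Cmul (Cmul (F a i) (Cconj (F a k))) (x k))).
  rewrite csum_scal_r. ring. intros; ring.
Qed.

Lemma herm_Pm : herm n Pm.
Proof. intros i j Hi Hj. unfold Pm. rewrite Cconj_add, Cconj_opp, csum_conj. f_equal.
  unfold delta; destruct (Nat.eqb_spec j i), (Nat.eqb_spec i j); try lia; apply Cx_eq; simpl; ring.
  f_equal. apply csum_ext; intros. rewrite Cconj_mul, Cconj_conj; ring. Qed.

Hypothesis HON : ON.

Lemma ip_F_projv a x : (a < r)%nat -> ip n (F a) (projv x) = C0.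
Proof.
  intros Ha. unfold projv. rewrite ip_add_r, ip_opp_r, ip_sum_r.
  rewrite (csum_ext r _ (fun b => Cmul (delta a b) (ip n (F b) x))).
  rewrite csum_delta_r by auto. ring.
  intros; rewrite HON; auto.
Qed.

Lemma projv_projv x i : projv (projv x) i = projv x i.
Proof.
  unfold projv at 1. rewrite (csum_ext r _ (fun _ => C0)). rewrite csum_0. ring.
  intros. rewrite ip_F_projv; auto. ring.
Qed.

Lemma ip_projv_l x y : ip n (projv x) y = Cadd (ip n x y) (Copp (csum r (fun a => Cmul (Cconj (ip n (F a) x)) (ip n (F a) y)))).
Proof.
  rewrite ip_swap_conj. unfold projv. rewrite ip_add_r, ip_opp_r, ip_sum_r.
  rewrite Cconj_add, Cconj_opp, csum_conj, <- ip_swap_conj. f_equal. f_equal. apply csum_ext; intros.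
  rewrite Cconj_mul, ip_conj. ring.
Qed.

Lemma proj_norm x : vnorm2 n (projv x) = vnorm2 n x - rsum r (fun a => Cnorm2 (ip n (F a) x)).
Proof.
  apply RtoC_inj. rewrite vnorm2_ip, ip_projv_l.
  rewrite (csum_ext r (fun a => Cmul (Cconj (ip n (F a) x)) (ip n (F a) (projv x))) (fun _ => C0)).
  2:{ intros; rewrite ip_F_projv; auto. ring. }
  rewrite csum_0. unfold projv. rewrite ip_add_r, ip_opp_r, ip_sum_r.
  rewrite <- vnorm2_ip. unfold Rminus. rewrite RtoC_add, RtoC_opp, rsum_Cnorm2.
  rewrite (csum_ext r (fun a => Cmul (ip n x (F a)) (ip n (F a) x)) (fun k => Cmul (Cconj (ip n (F k) x)) (ip n (F k) x))).
  ring. intros. rewrite (ip_swap_conj n x). auto.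
Qed.
End Proj.

Definition comb (s : R) (A : Mat) (t : R) (B : Mat) : Mat :=
  fun i j => Cadd (Cmul (RtoC s) (A i j)) (Cmul (RtoC t) (B i j)).
Definition Id : Mat := fun i j => delta i j.

Lemma Rabs_le_inv a b : Rabs a <= b -> - b <= a <= b.
Proof. unfold Rabs; destruct (Rcase_abs a); intros; lra. Qed.

Lemma mv_comb n s A t B x i : mv n (comb s A t B) x i = Cadd (Cmul (RtoC s) (mv n A x i)) (Cmul (RtoC t) (mv n B x i)).
Proof. unfold mv, comb. rewrite <- !csum_scal, <- csum_add. apply csum_ext; intros; ring. Qed.
Lemma mv_Id n x i : (i < n)%nat -> mv n Id x i = x i.
Proof. intros; unfold mv, Id. apply csum_delta_r; auto. Qed.
Lemma herm_comb n s A t B : herm n A -> herm n B -> herm n (comb s A t B).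
Proof. intros HA HB i j Hi Hj. unfold comb. rewrite HA, HB by auto.
  rewrite Cconj_add, !Cconj_mul, !Cconj_RtoC; auto. Qed.
Lemma herm_Id n : herm n Id.
Proof. intros i j Hi Hj. unfold Id, delta. destruct (Nat.eqb_spec j i), (Nat.eqb_spec i j); try lia;
  apply Cx_eq; simpl; ring. Qed.
Lemma quad_comb' n s A t B x : quad n (comb s A t B) x = s * quad n A x + t * quad n B x.
Proof. apply quad_comb. Qed.
Lemma quad_Id n x : quad n Id x = vnorm2 n x.
Proof. apply quad_id. Qed.

Lemma herm_sandwich n P B : herm n P -> herm n B -> herm n (mm n P (mm n B P)).
Proof.
  intros HP HB i j Hi Hj. unfold mm. rewrite csum_conj.
  rewrite (csum_ext n (fun k => Cconj (Cmul (P i k) (csum n (fun k0 => Cmul (B k k0) (P k0 j)))))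
     (fun k => csum n (fun l => Cmul (P j l) (Cmul (B l k) (P k i))))).
  rewrite csum_swap. apply csum_ext; intros. rewrite <- csum_scal. apply csum_ext; intros; ring.
  intros k Hk. rewrite Cconj_mul, csum_conj, <- csum_scal. apply csum_ext; intros l Hl.
  rewrite Cconj_mul, <- (HP i k), <- (HB k l), <- (HP l j) by auto. ring.
Qed.

Lemma vnorm2_zero n x : vnorm2 n x = 0 -> forall i, (i < n)%nat -> x i = C0.
Proof. intros. apply Cnorm2_zero. apply (rsum_zero_nonneg n (fun i => Cnorm2 (x i))); auto.
  intros; apply Cnorm2_nonneg. Qed.

Lemma quad_zero_vec n A x : vnorm2 n x = 0 -> quad n A x = 0.
Proof. intros. rewrite (quad_ext n A x (fun _ => C0)). apply quad_zero. apply vnorm2_zero; auto. Qed.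

Lemma ip_scal_l n x y c : ip n (fun i => Cmul (x i) c) y = Cmul (Cconj c) (ip n x y).
Proof. unfold ip. rewrite <- csum_scal. apply csum_ext; intros. rewrite Cconj_mul; ring. Qed.

Lemma vnorm2_ev n i : (i < n)%nat -> vnorm2 n (ev i) = 1.
Proof. intros. apply RtoC_inj. rewrite vnorm2_ip. unfold ip, ev.
  rewrite (csum_ext n _ (fun k => Cmul (delta k i) Cone)). rewrite csum_delta_l; auto.
  intros. unfold delta. destruct (Nat.eqb k i); apply Cx_eq; simpl; ring. Qed.

Lemma ip_ev n y i : (i < n)%nat -> ip n y (ev i) = Cconj (y i).
Proof. intros. unfold ip, ev. rewrite (csum_ext n _ (fun k => Cmul (delta k i) (Cconj (y k)))).
  apply csum_delta_l; auto. intros; ring. Qed.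

Lemma projv_ext n r F x y i : (forall k, (k < n)%nat -> x k = y k) -> (i < n)%nat ->
  projv n r F x i = projv n r F y i.
Proof. intros. unfold projv. rewrite H by auto. f_equal. f_equal. apply csum_ext; intros.
  f_equal. apply ip_ext; auto. Qed.

Lemma mv_scal n M x c i : mv n M (fun j => Cmul (x j) c) i = Cmul (mv n M x i) c.
Proof. unfold mv. rewrite <- csum_scal_r. apply csum_ext; intros; ring. Qed.

Lemma spec_step n M r F lam : herm n M -> ON n r F ->
  (forall a i, (a < r)%nat -> (i < n)%nat -> mv n M (F a) i = Cmul (RtoC (lam a)) (F a i)) ->
  (r < n)%nat ->
  exists v mu, (forall a, (a < r)%nat -> ip n (F a) v = C0) /\ ip n v v = Cone /\
     (forall i, (i < n)%nat -> mv n M v i = Cmul (RtoC mu) (v i)).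
Proof.
  intros HM HON Heig Hr.
  set (c := Kb n M + 1).
  set (Mc := comb 1 M c Id).
  assert (HMc : herm n Mc) by (apply herm_comb; auto; apply herm_Id).
  assert (HqMc : forall x, vnorm2 n x <= quad n Mc x).
  { intros. unfold Mc. rewrite quad_comb', quad_Id. pose proof (quad_bound n M x).
    apply Rabs_le_inv in H. unfold c. lra. }
  assert (HmvMc : forall x i, (i < n)%nat -> mv n Mc x i = Cadd (mv n M x i) (Cmul (RtoC c) (x i))).
  { intros. unfold Mc. rewrite mv_comb, mv_Id by auto. ring. }
  set (P := Pm r F).
  assert (HP : herm n P) by apply herm_Pm.
  set (N0 := mm n P (mm n Mc P)).
  assert (HN0 : herm n N0) by (apply herm_sandwich; auto).
  assert (HmvN0 : forall x i, (i < n)%nat -> mv n N0 x i = projv n r F (mv n Mc (projv n r F x)) i).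
  { intros. unfold N0. rewrite mv_mm. unfold P at 1. rewrite mv_Pm by auto. apply projv_ext; auto.
    intros. rewrite mv_mm. apply mv_ext. intros. unfold P. apply mv_Pm; auto. }
  assert (HqN0 : forall x, quad n N0 x = quad n Mc (projv n r F x)).
  { intros x. unfold quad. f_equal.
    transitivity (ip n x (mv n P (mv n Mc (mv n P x)))).
    { apply ip_ext; auto. intros. unfold N0. rewrite mv_mm. apply mv_ext. intros. apply mv_mm. }
    rewrite <- ip_herm by auto. apply ip_ext. intros; apply mv_Pm; auto.
    intros. apply mv_ext. intros; apply mv_Pm; auto. }
  assert (HpN0 : forall x, vnorm2 n (projv n r F x) <= quad n N0 x).
  { intros; rewrite HqN0; auto. }
  assert (Hex : exists i, (i < n)%nat /\ 0 < vnorm2 n (projv n r F (ev i))).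
  { apply rsum_pos_exists. intros; apply vnorm2_nonneg.
    rewrite (rsum_ext n _ (fun i => 1 - rsum r (fun a => Cnorm2 (F a i)))).
    2:{ intros i Hi. rewrite proj_norm by auto. rewrite vnorm2_ev by auto. f_equal.
        apply rsum_ext; intros a Ha. rewrite ip_ev, Cnorm2_conj by auto. auto. }
    unfold Rminus. rewrite rsum_add, rsum_opp, rsum_swap.
    rewrite (rsum_ext r _ (fun _ => 1)).
    2:{ intros a Ha. apply RtoC_inj. fold (vnorm2 n (F a)). rewrite vnorm2_ip, HON by auto.
        unfold delta; rewrite Nat.eqb_refl; auto. }
    assert (forall m, rsum m (fun _ => 1) = INR m).
    { induction m; simpl; auto. rewrite IHm. destruct m; simpl; lra. }
    rewrite !H. apply lt_INR in Hr. lra. }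
  destruct Hex as [i0 [Hi0 Hpos]].
  set (E := fun t => exists x, 0 < vnorm2 n x /\ t = quad n N0 x / vnorm2 n x).
  assert (HEb : forall t, E t -> t <= Kb n N0).
  { intros t [x [Hx ->]]. pose proof (quad_bound n N0 x). apply Rabs_le_inv in H.
    unfold Rdiv. apply Rmult_le_reg_r with (vnorm2 n x); auto.
    rewrite Rmult_assoc, Rinv_l by lra. lra. }
  destruct (completeness E) as [mu [Hub Hlub]].
  { exists (Kb n N0). intros t Ht; apply HEb; auto. }
  { exists (quad n N0 (ev i0) / vnorm2 n (ev i0)). exists (ev i0). split; auto.
    rewrite vnorm2_ev by auto. lra. }
  assert (Hmu : 0 < mu).
  { assert (E (quad n N0 (ev i0) / vnorm2 n (ev i0))).
    { exists (ev i0). rewrite vnorm2_ev by auto. split; auto; lra. }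
    apply Hub in H. rewrite vnorm2_ev in H by auto. pose proof (HpN0 (ev i0)). lra. }
  set (N1 := comb mu Id (-1) N0).
  assert (HqN1 : forall x, quad n N1 x = mu * vnorm2 n x - quad n N0 x).
  { intros. unfold N1. rewrite quad_comb', quad_Id. ring. }
  destruct (lemmaK n N1) as [x [Hx Hker]].
  { apply herm_comb; auto. apply herm_Id. }
  { intros x. rewrite HqN1. destruct (vnorm2_nonneg n x) as [Hx|Hx].
    - assert (E (quad n N0 x / vnorm2 n x)) by (exists x; auto). apply Hub in H.
      unfold Rdiv in H. apply Rmult_le_compat_r with (r := vnorm2 n x) in H; [|lra].
      rewrite Rmult_assoc, Rinv_l in H by lra. lra.
    - rewrite quad_zero_vec by auto. rewrite <- Hx. lra. }
  { intros eps Heps. apply NNPP. intros Hne.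
    assert (is_upper_bound E (mu - eps)).
    { intros t [x [Hx ->]]. apply Rnot_lt_le. intros Hlt. apply Hne. exists x. rewrite HqN1.
      unfold Rdiv in Hlt. apply Rmult_lt_compat_r with (r := vnorm2 n x) in Hlt; auto.
      rewrite Rmult_assoc, Rinv_l in Hlt by lra. lra. }
    apply Hlub in H. lra. }
  assert (Heig0 : forall i, (i < n)%nat -> mv n N0 x i = Cmul (RtoC mu) (x i)).
  { intros i Hi. pose proof (Hker i Hi). unfold N1 in H. rewrite mv_comb, mv_Id in H by auto.
    transitivity (Cadd (mv n N0 x i) (Cadd (Cmul (RtoC mu) (x i)) (Cmul (RtoC (-1)) (mv n N0 x i)))).
    rewrite H. ring. apply Cx_eq; simpl; ring. }
  assert (Hxw : forall i, (i < n)%nat -> x i = Cmul (projv n r F (mv n Mc (projv n r F x)) i) (RtoC (/ mu))).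
  { intros i Hi. rewrite <- HmvN0, Heig0 by auto. apply Cx_eq; simpl; field; lra. }
  assert (Horth : forall a, (a < r)%nat -> ip n (F a) x = C0).
  { intros a Ha. rewrite (ip_ext n (F a) x (F a) (fun i => Cmul (projv n r F (mv n Mc (projv n r F x)) i) (RtoC (/ mu)))) by auto.
    rewrite ip_scal_r, ip_F_projv by auto. ring. }
  assert (Hpx : forall i, (i < n)%nat -> projv n r F x i = x i).
  { intros i Hi. unfold projv. rewrite (csum_ext r _ (fun _ => C0)). rewrite csum_0. ring.
    intros; rewrite Horth; auto; ring. }
  assert (HMcx : forall i, (i < n)%nat -> projv n r F (mv n Mc x) i = Cmul (RtoC mu) (x i)).
  { intros i Hi. rewrite <- Heig0, HmvN0 by auto. apply projv_ext; auto. intros. apply mv_ext.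
    intros; rewrite Hpx; auto. }
  assert (HFMc : forall a, (a < r)%nat -> ip n (F a) (mv n Mc x) = C0).
  { intros a Ha. rewrite <- ip_herm by auto.
    rewrite (ip_ext n (mv n Mc (F a)) x (fun i => Cmul (F a i) (RtoC (lam a + c))) x).
    rewrite ip_scal_l, Horth by auto. ring.
    intros. rewrite HmvMc, Heig by auto. rewrite RtoC_add. ring. auto. }
  assert (HMx : forall i, (i < n)%nat -> mv n M x i = Cmul (RtoC (mu - c)) (x i)).
  { intros i Hi. pose proof (HMcx i Hi). unfold projv in H.
    rewrite (csum_ext r _ (fun _ => C0)) in H. rewrite csum_0 in H. rewrite HmvMc in H by auto.
    unfold Rminus. rewrite RtoC_add, RtoC_opp.
    transitivity (Cadd (Cadd (Cadd (mv n M x i) (Cmul (RtoC c) (x i))) (Copp C0)) (Copp (Cmul (RtoC c) (x i)))).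
    ring. rewrite H. ring.
    intros; rewrite HFMc; auto; ring. }
  set (sc := / sqrt (vnorm2 n x)).
  assert (Hsq : 0 < sqrt (vnorm2 n x)) by (apply sqrt_lt_R0; auto).
  exists (fun i => Cmul (x i) (RtoC sc)), (mu - c). split; [|split].
  - intros a Ha. rewrite ip_scal_r, Horth by auto. ring.
  - rewrite ip_scal_l, ip_scal_r, <- vnorm2_ip. rewrite Cconj_RtoC, <- !RtoC_mul. f_equal.
    unfold sc. pattern (vnorm2 n x) at 2. rewrite <- (sqrt_sqrt (vnorm2 n x)) by lra. field. lra.
  - intros i Hi. rewrite mv_scal, HMx by auto. ring.
Qed.

Lemma spectral_exists n M : herm n M -> exists U lam, spectral_decomp n M U lam.
Proof.
  intros HM.
  assert (Hfam : forall r, (r <= n)%nat -> exists F lam, ON n r F /\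
            forall a i, (a < r)%nat -> (i < n)%nat -> mv n M (F a) i = Cmul (RtoC (lam a)) (F a i)).
  { induction r; intros Hr.
    - exists (fun _ _ => C0), (fun _ => 0). split; [intros a b Ha; lia | intros a i Ha; lia].
    - destruct IHr as [F [lam [HON Heig]]]; [lia|].
      destruct (spec_step n M r F lam HM HON Heig) as [v [mu [Hv1 [Hv2 Hv3]]]]; [lia|].
      exists (fun a => if Nat.eqb a r then v else F a), (fun a => if Nat.eqb a r then mu else lam a). split.
      + intros a b Ha Hb. unfold delta.
        destruct (Nat.eqb_spec a r), (Nat.eqb_spec b r); subst.
        * rewrite Nat.eqb_refl; auto.
        * destruct (Nat.eqb_spec r b); [lia|]. rewrite <- ip_conj, Hv1 by lia. apply Cconj_C0.
        * destruct (Nat.eqb_spec a r); [lia|]. apply Hv1; lia.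
        * rewrite HON by lia. auto.
      + intros a i Ha Hi. destruct (Nat.eqb_spec a r). apply Hv3; auto. apply Heig; auto; lia. }
  destruct (Hfam n (le_n n)) as [F [lam [HON Heig]]].
  set (U := fun i k => F k i).
  assert (HU : unitary n U).
  { apply cols_unitary. intros a b Ha Hb. apply HON; auto. }
  exists U, lam. split; auto.
  intros i j Hi Hj.
  transitivity (csum n (fun k => Cmul (mv n M (F k) i) (Cconj (F k j)))).
  2:{ apply csum_ext; intros. rewrite Heig by auto. unfold U; ring. }
  unfold mv. rewrite (csum_ext n _ (fun k => csum n (fun l => Cmul (M i l) (Cmul (U l k) (Cconj (U j k)))))).
  2:{ intros. rewrite <- csum_scal_r. apply csum_ext; intros. unfold U; ring. }
  rewrite csum_swap.
  rewrite (csum_ext n _ (fun l => Cmul (delta l j) (M i l))).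
  rewrite csum_delta_l; auto.
  intros l Hl. rewrite csum_scal. rewrite unitary_delta; auto. ring.
Qed.

Definition Adj (A : Mat) : Mat := fun j i => Cconj (A i j).
Definition AAs (d e : nat) (A : Mat) : Mat := fun i i' => csum e (fun j => Cmul (A i j) (Cconj (A i' j))).

Lemma csum_swap_3g n m p f : csum n (fun i => csum m (fun j => csum p (fun k => f i j k))) =
  csum p (fun k => csum n (fun i => csum m (fun j => f i j k))).
Proof. transitivity (csum n (fun i => csum p (fun k => csum m (fun j => f i j k)))).
  apply csum_ext; intros; apply csum_swap. apply csum_swap. Qed.

Lemma quad_AAs d e A x : quad d (AAs d e A) x = rsum e (fun j => Cnorm2 (csum d (fun i => Cmul (Cconj (A i j)) (x i)))).
Proof.
  unfold quad. rewrite <- (Re_RtoC (rsum e _)). f_equal. rewrite rsum_Cnorm2.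
  unfold ip, mv, AAs.
  transitivity (csum d (fun i => csum d (fun i' => csum e (fun j => Cmul (Cmul (Cconj (x i)) (A i j)) (Cmul (Cconj (A i' j)) (x i')))))).
  { apply csum_ext; intros. rewrite <- csum_scal. apply csum_ext; intros. rewrite <- csum_scal_r, <- csum_scal.
    apply csum_ext; intros; ring. }
  rewrite csum_swap_3g. apply csum_ext; intros j Hj. rewrite csum_conj, csum_mul. apply csum_ext; intros.
  apply csum_ext; intros. rewrite Cconj_mul, Cconj_conj. ring.
Qed.

Lemma psd_AAs d e A : psd d (AAs d e A).
Proof. intros x. rewrite quad_AAs. apply rsum_nonneg; intros; apply Cnorm2_nonneg. Qed.

Lemma herm_AAs d e A : herm d (AAs d e A).
Proof. intros i j Hi Hj. unfold AAs. rewrite csum_conj. apply csum_ext; intros.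
  rewrite Cconj_mul, Cconj_conj. ring. Qed.

Lemma dec_ext n M M' U lam : (forall i j, (i < n)%nat -> (j < n)%nat -> M i j = M' i j) ->
  spectral_decomp n M U lam -> spectral_decomp n M' U lam.
Proof. intros H [HU HM]. split; auto. intros. rewrite <- H by auto. auto. Qed.

Lemma psd_ext n M M' : (forall i j, (i < n)%nat -> (j < n)%nat -> M i j = M' i j) -> psd n M -> psd n M'.
Proof. intros H Hp x. rewrite <- (quad_mat_ext n M M' x H). auto. Qed.

Lemma herm_ext n M M' : (forall i j, (i < n)%nat -> (j < n)%nat -> M i j = M' i j) -> herm n M -> herm n M'.
Proof. intros H Hh i j Hi Hj. rewrite <- !H by auto. auto. Qed.

Lemma vN_ext n M M' : herm n M -> psd n M -> (forall i j, (i < n)%nat -> (j < n)%nat -> M i j = M' i j) ->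
  vN_entropy n M = vN_entropy n M'.
Proof.
  intros Hh Hp H. destruct (spectral_exists n M Hh) as [U [lam HD]].
  rewrite (vN_dec n M U lam Hp HD). symmetry. apply (vN_dec n M' U lam). eapply psd_ext; eauto. eapply dec_ext; eauto.
Qed.

Definition Mconj (M : Mat) : Mat := fun i j => Cconj (M i j).

Lemma vN_conj n M : herm n M -> psd n M -> vN_entropy n (Mconj M) = vN_entropy n M.
Proof.
  intros Hh Hp. destruct (spectral_exists n M Hh) as [U [lam [HU HM]]].
  rewrite (vN_dec n M U lam Hp) by (split; auto).
  apply (vN_dec n (Mconj M) (Mconj U) lam).
  - intros x. replace (quad n (Mconj M) x) with (quad n M (fun i => Cconj (x i))). apply Hp.
    rewrite !quad_sum. apply rsum_ext; intros. apply rsum_ext; intros. unfold Mconj.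
    destruct (x k), (x k0), (M k k0); simpl; ring.
  - split.
    + intros i j Hi Hj. unfold Mconj. rewrite <- (Cconj_RtoC 1), <- Cconj_C0.
      replace (if Nat.eqb i j then Cconj Cone else Cconj C0) with (Cconj (if Nat.eqb i j then Cone else C0))
        by (destruct (Nat.eqb i j); auto).
      rewrite <- HU by auto. rewrite csum_conj. apply csum_ext; intros. rewrite Cconj_mul; auto.
    + intros i j Hi Hj. unfold Mconj. rewrite HM by auto. rewrite csum_conj. apply csum_ext; intros.
      rewrite !Cconj_mul, Cconj_RtoC. auto.
Qed.

Lemma ip_sum_l n r (F : nat -> nat -> Cx) c y :
  ip n (fun i => csum r (fun a => Cmul (F a i) (c a))) y = csum r (fun a => Cmul (Cconj (c a)) (ip n (F a) y)).
Proof. rewrite ip_swap_conj, ip_sum_r, csum_conj. apply csum_ext; intros. rewrite Cconj_mul, ip_conj. ring. Qed.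

Lemma vnorm2_sub n u z : vnorm2 n (fun i => Cadd (u i) (Copp (z i))) = vnorm2 n u - 2 * Re (ip n u z) + vnorm2 n z.
Proof.
  apply RtoC_inj. rewrite vnorm2_ip. unfold ip. 
  rewrite (csum_ext n _ (fun i => Cadd (Cadd (Cmul (Cconj (u i)) (u i)) (Copp (Cadd (Cmul (Cconj (u i)) (z i)) (Cconj (Cmul (Cconj (u i)) (z i)))))) (Cmul (Cconj (z i)) (z i)))).
  2:{ intros. rewrite Cconj_add, Cconj_opp, Cconj_mul, Cconj_conj. ring. }
  rewrite !csum_add, csum_opp, csum_add, <- csum_conj.
  fold (ip n u u) (ip n z z) (ip n u z). rewrite <- !vnorm2_ip.
  generalize (ip n u z) as w. intros [a b]. apply Cx_eq; simpl; ring.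
Qed.

Section SWsec.
Variables (d e : nat) (A : Mat) (U : Mat) (lam : nat -> R) (W : Mat) (nu : nat -> R).
Hypothesis HU : spectral_decomp d (AAs d e A) U lam.
Hypothesis HW : spectral_decomp e (AAs e d (Adj A)) W nu.

Definition gv n : nat -> Cx := fun i => csum e (fun j => Cmul (A i j) (W j n)).
Definition hv k : nat -> Cx := fun j => csum d (fun i => Cmul (Cconj (A i j)) (U i k)).

Lemma f1 k n : ip d (col U k) (gv n) = ip e (hv k) (col W n).
Proof.
  unfold ip, gv, hv, col.
  rewrite (csum_ext d _ (fun i => csum e (fun j => Cmul (Cmul (Cconj (U i k)) (A i j)) (W j n)))).
  rewrite csum_swap. apply csum_ext; intros. rewrite csum_conj, <- csum_scal_r. apply csum_ext; intros.
  rewrite Cconj_mul, Cconj_conj. ring.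
  intros. rewrite <- csum_scal. apply csum_ext; intros; ring.
Qed.

Lemma f2 k : (k < d)%nat -> vnorm2 e (hv k) = lam k.
Proof. intros. rewrite <- (dec_quad_col d _ U lam HU k) by auto. rewrite quad_AAs. reflexivity. Qed.

Lemma f4 n : (n < e)%nat -> vnorm2 d (gv n) = nu n.
Proof. intros. rewrite <- (dec_quad_col e _ W nu HW n) by auto. rewrite quad_AAs.
  unfold vnorm2, gv, Adj, col. apply rsum_ext; intros. f_equal. apply csum_ext; intros.
  rewrite Cconj_conj; auto. Qed.

Lemma f3 k : (k < d)%nat -> rsum e (fun n => Cnorm2 (ip d (col U k) (gv n))) = lam k.
Proof. intros. rewrite <- f2 by auto. rewrite <- (parseval e W (hv k)) by (eapply dec_unitary; eauto).
  apply rsum_ext; intros. rewrite f1, <- ip_conj, Cnorm2_conj; auto. Qed.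

Lemma f5 n : (n < e)%nat -> rsum d (fun k => Cnorm2 (ip d (col U k) (gv n))) = nu n.
Proof. intros. rewrite <- f4 by auto. apply parseval. eapply dec_unitary; eauto. Qed.

Lemma f6 n m : (n < e)%nat -> (m < e)%nat -> ip d (gv n) (gv m) = Cmul (RtoC (nu m)) (delta n m).
Proof.
  intros Hn Hm.
  transitivity (ip e (col W n) (mv e (AAs e d (Adj A)) (col W m))).
  - unfold ip, gv, mv, AAs, Adj, col.
    transitivity (csum d (fun i => csum e (fun j => csum e (fun j' =>
       Cmul (Cmul (Cconj (W j n)) (Cmul (Cconj (A i j)) (A i j'))) (W j' m))))).
    { apply csum_ext; intros. rewrite csum_conj, csum_mul. apply csum_ext; intros. apply csum_ext; intros.
      rewrite Cconj_mul. ring. }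
    rewrite csum_swap. apply csum_ext; intros j Hj. rewrite <- csum_scal. rewrite csum_swap.
    apply csum_ext; intros j' Hj'. rewrite <- csum_scal_r, <- csum_scal. apply csum_ext; intros.
    rewrite Cconj_conj. ring.
  - rewrite (ip_ext e (col W n) _ (col W n) (fun i => Cmul (col W m i) (RtoC (nu m)))).
    rewrite ip_scal_r. erewrite dec_cols; eauto. ring.
    auto. intros. erewrite dec_eigen; eauto. unfold col; ring.
Qed.

Lemma bessel k : (k < d)%nat -> rsum e (fun n => Cnorm2 (ip d (col U k) (gv n)) * / nu n) <= 1.
Proof.
  intros Hk. set (u := col U k).
  set (s := rsum e (fun n => Cnorm2 (ip d u (gv n)) * / nu n)).
  set (cf := fun n => Cmul (ip d (gv n) u) (RtoC (/ nu n))).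
  set (z := fun i => csum e (fun n => Cmul (gv n i) (cf n))).
  assert (Hu : vnorm2 d u = 1).
  { apply RtoC_inj. rewrite vnorm2_ip. unfold u. erewrite dec_cols; eauto. unfold delta; rewrite Nat.eqb_refl; auto. }
  assert (Huz : ip d u z = RtoC s).
  { unfold z. rewrite ip_sum_r. unfold s. rewrite <- csum_RtoC. apply csum_ext; intros. unfold cf.
    rewrite <- (ip_conj d u (gv k0)), RtoC_mul, <- Cnorm2_eq'. ring. }
  assert (Hgz : forall n, (n < e)%nat -> ip d (gv n) z = Cmul (RtoC (nu n)) (cf n)).
  { intros. unfold z. rewrite ip_sum_r. rewrite (csum_ext e _ (fun m => Cmul (delta n m) (Cmul (RtoC (nu m)) (cf m)))).
    apply csum_delta_r; auto. intros. rewrite f6 by auto. ring. }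
  assert (Hzz : ip d z z = RtoC s).
  { unfold z at 1. rewrite ip_sum_l. unfold s. rewrite <- csum_RtoC. apply csum_ext; intros n Hn.
    rewrite Hgz by auto. unfold cf. rewrite Cconj_mul, Cconj_RtoC, <- (ip_conj d u (gv n)).
    rewrite Cconj_conj. destruct (Req_EM_T (nu n) 0).
    - rewrite e0, Rinv_0, Rmult_0_r. apply Cx_eq; simpl; ring.
    - rewrite !RtoC_mul, <- Cnorm2_eq.
      assert (E : Cmul (RtoC (nu n)) (RtoC (/ nu n)) = Cone) by (rewrite <- RtoC_mul, Rinv_r; auto).
      transitivity (Cmul (Cmul (Cmul (Cconj (ip d u (gv n))) (ip d u (gv n))) (RtoC (/ nu n))) (Cmul (RtoC (nu n)) (RtoC (/ nu n)))).
      ring. rewrite E; ring. }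
  pose proof (vnorm2_nonneg d (fun i => Cadd (u i) (Copp (z i)))).
  rewrite vnorm2_sub, Hu, Huz in H. simpl in H.
  assert (vnorm2 d z = s) by (apply RtoC_inj; rewrite vnorm2_ip; auto).
  lra.
Qed.

Lemma H_ge : Hs e nu <= Hs d lam.
Proof.
  pose proof ln2_pos.
  set (T := fun k n => Cnorm2 (ip d (col U k) (gv n))).
  assert (HT : forall k n, (k < d)%nat -> (n < e)%nat -> 0 <= T k n) by (intros; apply Cnorm2_nonneg).
  pose proof (lemmaG d e T HT) as G. simpl in G.
  rewrite (rsum_ext d (fun k => ent (rsum e (fun n => T k n))) (fun k => ent (lam k))) in G
    by (intros; unfold T; rewrite f3; auto).
  rewrite (rsum_ext e (fun n => ent (rsum d (fun k => T k n))) (fun n => ent (nu n))) in G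
    by (intros; unfold T; rewrite f5; auto).
  assert (0 <= rsum d (fun k => rsum e (fun n => T k n - T k n * rsum e (fun n0 => T k n0) / rsum d (fun k0 => T k0 n)))).
  { apply rsum_nonneg; intros k Hk.
    rewrite (rsum_ext e _ (fun n => T k n + (- lam k) * (T k n * / nu n))).
    2:{ intros n Hn. assert (E1 : rsum e (fun n0 => T k n0) = lam k) by (apply f3; auto).
        assert (E2 : rsum d (fun k0 => T k0 n) = nu n) by (apply f5; auto).
        rewrite E1, E2. unfold Rdiv; ring. }
    rewrite rsum_add, rsum_scal. unfold T.
    pose proof (f3 k Hk) as E1. pose proof (bessel k Hk) as H0.
    assert (0 <= lam k) by (eapply dec_nonneg; eauto; apply psd_AAs).
    nra. }
  unfold Hs. assert (0 <= rsum d (fun k => rsum e (fun n => T k n - T k n * rsum e (fun n0 => T k n0) / rsum d (fun k0 => T k0 n))) / ln 2).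
  { unfold Rdiv; apply Rmult_le_pos; auto. left; apply Rinv_0_lt_compat; auto. }
  lra.
Qed.
End SWsec.

Lemma SW d e A : vN_entropy d (AAs d e A) = vN_entropy e (AAs e d (Adj A)).
Proof.
  destruct (spectral_exists d (AAs d e A) (herm_AAs d e A)) as [U [lam HU]].
  destruct (spectral_exists e (AAs e d (Adj A)) (herm_AAs e d (Adj A))) as [W [nu HW]].
  rewrite (vN_dec _ _ U lam (psd_AAs d e A) HU), (vN_dec _ _ W nu (psd_AAs e d (Adj A)) HW).
  apply Rle_antisym.
  - apply (H_ge e d (Adj A) W nu U lam HW).
    eapply dec_ext; [|exact HU]. intros. unfold AAs, Adj. apply csum_ext; intros. rewrite !Cconj_conj; auto.
  - apply (H_ge d e A U lam W nu HU HW).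
Qed.

Lemma L0_pos x : 0 < x -> L0 x = ln x.
Proof. intros; unfold L0; destruct (Req_EM_T x 0); lra. Qed.
Lemma L0_0 : L0 0 = 0.
Proof. unfold L0; destruct (Req_EM_T 0 0); lra. Qed.

Lemma ent_nonneg z : 0 <= z <= 1 -> 0 <= ent z.
Proof.
  intros Hz. pose proof ln2_pos. rewrite ent_L0. destruct (Req_dec z 0).
  - subst. rewrite L0_0. unfold Rdiv; rewrite Rmult_0_l, Ropp_0, Rmult_0_l; lra.
  - rewrite L0_pos by lra. assert (ln z <= 0).
    { destruct (Req_dec z 1). subst; rewrite ln_1; lra. left; rewrite <- ln_1; apply ln_increasing; lra. }
    unfold Rdiv. apply Rmult_le_pos; [nra|]. left; apply Rinv_0_lt_compat; auto.
Qed.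

Lemma tangent m y : 0 < m -> 0 <= y -> y * L0 y >= y * ln m + y - m.
Proof.
  intros Hm Hy. destruct Hy as [Hy|Hy].
  - rewrite L0_pos by auto. pose proof (ln_le_sub1 (m / y) ltac:(apply Rdiv_lt_0_compat; lra)).
    unfold Rdiv in H. rewrite ln_mult, ln_Rinv in H by (try apply Rinv_0_lt_compat; lra).
    assert (y * (ln m + - ln y) <= y * (m * / y - 1)) by (apply Rmult_le_compat_l; lra).
    replace (y * (m * / y - 1)) with (m - y) in H0 by (field; lra). lra.
  - subst. rewrite L0_0. lra.
Qed.

Lemma ent_conc c x z : 0 <= c <= 1 -> 0 <= x -> 0 <= z -> c * ent x + (1 - c) * ent z <= ent (c * x + (1 - c) * z).
Proof.
  intros Hc Hx Hz. pose proof ln2_pos. rewrite !ent_L0.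
  set (m := c * x + (1 - c) * z).
  assert (Hm : 0 <= m) by (unfold m; nra).
  destruct Hm as [Hm|Hm].
  - pose proof (tangent m x Hm Hx). pose proof (tangent m z Hm Hz). rewrite (L0_pos m Hm).
    apply Rmult_le_reg_r with (ln 2); auto. unfold Rdiv.
    replace ((c * (- (x * L0 x) * / ln 2) + (1 - c) * (- (z * L0 z) * / ln 2)) * ln 2) with (- (c * (x * L0 x) + (1 - c) * (z * L0 z))) by (field; lra).
    replace (- (m * ln m) * / ln 2 * ln 2) with (- (m * ln m)) by (field; lra).
    assert (c * (x * L0 x) >= c * (x * ln m + x - m)) by (apply Rle_ge, Rmult_le_compat_l; lra).
    assert ((1 - c) * (z * L0 z) >= (1 - c) * (z * ln m + z - m)) by (apply Rle_ge, Rmult_le_compat_l; lra).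
    assert (c * (x * ln m + x - m) + (1 - c) * (z * ln m + z - m) = m * ln m) by (unfold m; ring).
    lra.
  - assert (c * x = 0) by (unfold m in Hm; nra). assert ((1 - c) * z = 0) by (unfold m in Hm; nra).
    rewrite <- Hm, L0_0.
    assert (c * (x * L0 x) = 0). { destruct (Req_dec c 0). subst; ring. assert (x = 0) by nra. subst; ring. }
    assert ((1 - c) * (z * L0 z) = 0). { destruct (Req_dec (1 - c) 0). rewrite H3; ring. assert (z = 0) by nra. subst; ring. }
    unfold Rdiv. replace (c * (- (x * L0 x) * / ln 2) + (1 - c) * (- (z * L0 z) * / ln 2)) with (- (c * (x * L0 x) + (1 - c) * (z * L0 z)) * / ln 2) by ring.
    rewrite H2, H3. lra.
Qed.

Lemma ent_mul a b : 0 <= a -> 0 <= b -> ent (a * b) = a * ent b + b * ent a.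
Proof.
  intros Ha Hb. pose proof ln2_pos. rewrite !ent_L0.
  destruct Ha as [Ha|Ha]; [|subst; replace (0 * b) with 0 by ring; rewrite L0_0; field; lra].
  destruct Hb as [Hb|Hb]; [|subst; replace (a * 0) with 0 by ring; rewrite L0_0; field; lra].
  rewrite !L0_pos by nra. rewrite ln_mult by auto. field. lra.
Qed.

Lemma h2_ent p : h2 p = ent p + ent (1 - p).
Proof. unfold h2, ent; ring. Qed.

Lemma Hs_nonneg n z : (forall j, (j < n)%nat -> 0 <= z j) -> rsum n z = 1 -> 0 <= Hs n z.
Proof. intros. apply rsum_nonneg; intros. apply ent_nonneg. split; auto.
  rewrite <- H0. apply (rsum_term_le n z); auto. Qed.

Lemma mix_lemma n c x y : 0 < c <= 1 -> (forall j, (j < n)%nat -> 0 <= x j) -> (forall j, (j < n)%nat -> 0 <= y j) ->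
  rsum n x = 1 -> rsum n y = 1 - c -> c * Hs n x <= rsum n (fun j => ent (c * x j + y j)).
Proof.
  intros Hc Hx Hy Sx Sy. unfold Hs. rewrite <- rsum_scal.
  destruct (Req_dec c 1).
  - subst. rewrite Rminus_diag in Sy. pose proof (rsum_zero_nonneg n y Hy Sy).
    right. apply rsum_ext; intros. rewrite H by auto. replace (1 * x k + 0) with (x k) by ring. ring.
  - set (z := fun j => y j / (1 - c)).
    assert (Hz : forall j, (j < n)%nat -> 0 <= z j) by (intros; unfold z; unfold Rdiv; apply Rmult_le_pos; auto; left; apply Rinv_0_lt_compat; lra).
    assert (Sz : rsum n z = 1) by (unfold z; unfold Rdiv; rewrite (rsum_ext n _ (fun j => / (1 - c) * y j)) by (intros; ring);
       rewrite rsum_scal, Sy; field; lra).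
    pose proof (Hs_nonneg n z Hz Sz). unfold Hs in H0.
    apply Rle_trans with (rsum n (fun j => c * ent (x j) + (1 - c) * ent (z j))).
    + rewrite rsum_add, !rsum_scal. assert (0 < 1 - c) by lra. nra.
    + apply rsum_le; intros j Hj. replace (c * x j + y j) with (c * x j + (1 - c) * z j) by (unfold z; field; lra).
      apply ent_conc; auto; lra.
Qed.

Definition trace n (M : Mat) := rsum n (fun i => Re (M i i)).

Lemma trace_unitary n V X : unitary n V -> rsum n (fun j => quad n X (col V j)) = trace n X.
Proof.
  intros HV. unfold quad, trace. rewrite <- !Re_csum. f_equal.
  unfold ip, mv, col.
  transitivity (csum n (fun j => csum n (fun i => csum n (fun k => Cmul (X i k) (Cmul (V k j) (Cconj (V i j))))))).
  { apply csum_ext; intros. apply csum_ext; intros. rewrite <- csum_scal. apply csum_ext; intros; ring. }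
  transitivity (csum n (fun i => csum n (fun k => csum n (fun j => Cmul (X i k) (Cmul (V k j) (Cconj (V i j))))))).
  { rewrite csum_swap. apply csum_ext; intros. rewrite csum_swap. auto. }
  apply csum_ext; intros i Hi.
  rewrite (csum_ext n _ (fun k => Cmul (delta k i) (X i k))).
  apply csum_delta_l; auto.
  intros k Hk. rewrite csum_scal. rewrite unitary_delta by auto. ring.
Qed.

Lemma psd_comb n c X Y R : psd n X -> psd n Y -> 0 <= c ->
  (forall i j, (i < n)%nat -> (j < n)%nat -> R i j = Cadd (Cmul (RtoC c) (X i j)) (Y i j)) ->
  psd n R /\ forall x, quad n R x = c * quad n X x + quad n Y x.
Proof.
  intros HX HY Hc HR.
  assert (E : forall x, quad n R x = c * quad n X x + quad n Y x).
  { intros x. rewrite (quad_mat_ext n R (comb c X 1 Y) x). rewrite quad_comb'. ring.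
    intros. rewrite HR by auto. unfold comb. ring. }
  split; auto. intros x. rewrite E. pose proof (HX x); pose proof (HY x). nra.
Qed.

Lemma lower n R X Y c : herm n X -> psd n X -> psd n Y -> herm n R ->
  (forall i j, (i < n)%nat -> (j < n)%nat -> R i j = Cadd (Cmul (RtoC c) (X i j)) (Y i j)) ->
  0 < c <= 1 -> trace n X = 1 -> trace n Y = 1 - c -> c * vN_entropy n X <= vN_entropy n R.
Proof.
  intros HhX HX HY HhR HR Hc TX TY.
  destruct (psd_comb n c X Y R HX HY ltac:(lra) HR) as [HpR EQ].
  destruct (spectral_exists n R HhR) as [V [a HV]].
  destruct (spectral_exists n X HhX) as [U [lam HU]].
  rewrite (vN_dec n R V a HpR HV), (vN_dec n X U lam HX HU).
  assert (HVu : unitary n V) by (eapply dec_unitary; eauto).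
  pose proof (S_min n X U lam V HX HU HVu).
  pose proof (mix_lemma n c (fun j => quad n X (col V j)) (fun j => quad n Y (col V j)) Hc
     (fun j _ => HX _) (fun j _ => HY _) ltac:(rewrite trace_unitary; auto) ltac:(rewrite trace_unitary; auto)).
  unfold Hs at 2.
  rewrite (rsum_ext n (fun k => ent (a k)) (fun j => ent (c * quad n X (col V j) + quad n Y (col V j)))).
  2:{ intros. rewrite <- EQ. erewrite dec_quad_col; eauto. }
  unfold Hs in H0 at 1. apply Rle_trans with (c * rsum n (fun j => ent (quad n X (col V j)))); auto.
  apply Rmult_le_compat_l; lra.
Qed.

Lemma unitary_Id n : unitary n Id.
Proof. apply cols_unitary. intros a b Ha Hb. unfold col, Id. fold (ev a) (ev b).
  rewrite ip_ev by auto. unfold ev.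
  unfold delta. destruct (Nat.eqb_spec b a), (Nat.eqb_spec a b); try lia; apply Cx_eq; simpl; ring. Qed.

Lemma vnorm2_col n U lam M k : spectral_decomp n M U lam -> (k < n)%nat -> rsum n (fun i => Cnorm2 (U i k)) = 1.
Proof. intros HD Hk. change (rsum n (fun i => Cnorm2 (U i k))) with (vnorm2 n (col U k)). apply RtoC_inj. rewrite vnorm2_ip.
  erewrite dec_cols; eauto. unfold delta; rewrite Nat.eqb_refl; auto. Qed.

Lemma upper n R M1 M2 p q : herm n M1 -> psd n M1 -> herm n M2 -> psd n M2 ->
  trace n M1 = 1 -> trace n M2 = 1 -> 0 <= p -> 0 <= q -> p + q = 1 ->
  (forall i j, (i < n)%nat -> (j < n)%nat -> R i j = Cadd (Cmul (RtoC p) (M1 i j)) (Cmul (RtoC q) (M2 i j))) ->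
  vN_entropy n R <= p * vN_entropy n M1 + q * vN_entropy n M2 + h2 p.
Proof.
  intros Hh1 Hp1 Hh2 Hp2 T1 T2 Hp Hq Hpq HR.
  destruct (spectral_exists n M1 Hh1) as [U [lam HU]].
  destruct (spectral_exists n M2 Hh2) as [W [mu HW]].
  rewrite (vN_dec n M1 U lam Hp1 HU), (vN_dec n M2 W mu Hp2 HW).
  assert (Hl : forall k, (k < n)%nat -> 0 <= lam k) by (intros; eapply dec_nonneg; eauto).
  assert (Hm : forall k, (k < n)%nat -> 0 <= mu k) by (intros; eapply dec_nonneg; eauto).
  assert (Sl : rsum n lam = 1) by (rewrite <- (dec_trace n M1 U lam HU); auto).
  assert (Sm : rsum n mu = 1) by (rewrite <- (dec_trace n M2 W mu HW); auto).
  set (A := fun i k => if Nat.ltb k n then Cmul (RtoC (sqrt (p * lam k))) (U i k)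
                       else Cmul (RtoC (sqrt (q * mu (k - n)%nat))) (W i (k - n)%nat)).
  assert (EA : forall i j, (i < n)%nat -> (j < n)%nat -> AAs n (n + n) A i j = R i j).
  { intros i j Hi Hj. unfold AAs. rewrite csum_split, HR by auto.
    destruct HU as [_ HU2]. destruct HW as [_ HW2]. rewrite HU2, HW2 by auto.
    rewrite <- !csum_scal. f_equal.
    - apply csum_ext; intros k Hk. unfold A. destruct (Nat.ltb_spec k n); [|lia].
      rewrite Cconj_mul, Cconj_RtoC.
      transitivity (Cmul (Cmul (RtoC (sqrt (p * lam k))) (RtoC (sqrt (p * lam k)))) (Cmul (U i k) (Cconj (U j k)))). ring.
      rewrite <- RtoC_mul, sqrt_sqrt by (apply Rmult_le_pos; auto). rewrite RtoC_mul. ring.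
    - apply csum_ext; intros k Hk. unfold A. destruct (Nat.ltb_spec (n + k) n); [lia|].
      replace (n + k - n)%nat with k by lia.
      rewrite Cconj_mul, Cconj_RtoC.
      transitivity (Cmul (Cmul (RtoC (sqrt (q * mu k))) (RtoC (sqrt (q * mu k)))) (Cmul (W i k) (Cconj (W j k)))). ring.
      rewrite <- RtoC_mul, sqrt_sqrt by (apply Rmult_le_pos; auto). rewrite RtoC_mul. ring. }
  rewrite <- (vN_ext n (AAs n (n + n) A) R (herm_AAs _ _ _) (psd_AAs _ _ _) EA).
  rewrite SW.
  set (G := AAs (n + n) n (Adj A)).
  destruct (spectral_exists (n + n) G (herm_AAs _ _ _)) as [Z [nu HZ]].
  rewrite (vN_dec _ G Z nu (psd_AAs _ _ _) HZ).
  eapply Rle_trans. apply (S_min (n + n) G Z nu Id (psd_AAs _ _ _) HZ (unitary_Id _)).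
  assert (Hd : forall k, (k < n + n)%nat -> quad (n + n) G (col Id k) = rsum n (fun i => Cnorm2 (A i k))).
  { intros k Hk. unfold G. rewrite quad_AAs. apply rsum_ext; intros i Hi. f_equal.
    unfold Adj, col, Id. rewrite (csum_ext (n + n) _ (fun j => Cmul (delta j k) (A i j))).
    apply csum_delta_l; auto. intros; rewrite Cconj_conj; ring. }
  rewrite (rsum_ext (n + n) _ (fun k => ent (rsum n (fun i => Cnorm2 (A i k))))) by (intros; rewrite Hd; auto).
  rewrite rsum_split.
  rewrite (rsum_ext n (fun k => ent (rsum n (fun i => Cnorm2 (A i k)))) (fun k => p * ent (lam k) + lam k * ent p)).
  rewrite (rsum_ext n (fun k => ent (rsum n (fun i => Cnorm2 (A i (n + k)%nat)))) (fun k => q * ent (mu k) + mu k * ent q)).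
  rewrite !rsum_add, !rsum_scal.
  rewrite (rsum_ext n (fun k => lam k * ent p) (fun k => ent p * lam k)) by (intros; ring).
  rewrite (rsum_ext n (fun k => mu k * ent q) (fun k => ent q * mu k)) by (intros; ring).
  rewrite !rsum_scal, Sl, Sm, h2_ent.
  replace (1 - p) with q by lra. unfold Hs. lra.
  - intros k Hk. rewrite <- ent_mul by auto. f_equal.
    rewrite (rsum_ext n _ (fun i => (q * mu k) * Cnorm2 (W i k))).
    rewrite rsum_scal. rewrite (vnorm2_col n W mu M2 k HW Hk). ring.
    intros i Hi. unfold A. destruct (Nat.ltb_spec (n + k) n); [lia|].
    replace (n + k - n)%nat with k by lia. rewrite Cnorm2_mul, Cnorm2_RtoC, sqrt_sqrt; auto.
    apply Rmult_le_pos; auto.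
  - intros k Hk. rewrite <- ent_mul by auto. f_equal.
    rewrite (rsum_ext n _ (fun i => (p * lam k) * Cnorm2 (U i k))).
    rewrite rsum_scal. rewrite (vnorm2_col n U lam M1 k HU Hk). ring.
    intros i Hi. unfold A. destruct (Nat.ltb_spec i n); [|lia]. destruct (Nat.ltb_spec k n); [|lia].
    rewrite Cnorm2_mul, Cnorm2_RtoC, sqrt_sqrt; auto.
    apply Rmult_le_pos; auto.
Qed.

Definition Trn (X : Mat) : Mat := fun j i => X i j.
Definition sc (s : R) (X : Mat) : Mat := fun i j => Cmul (RtoC (sqrt s)) (X i j).

Lemma schmidt dA dB X : vN_entropy dA (AAs dA dB X) = vN_entropy dB (AAs dB dA (Trn X)).
Proof.
  rewrite SW. rewrite <- (vN_conj dB (AAs dB dA (Adj X)) (herm_AAs _ _ _) (psd_AAs _ _ _)).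
  symmetry. apply vN_ext. apply herm_AAs. apply psd_AAs.
  intros i j Hi Hj. unfold Mconj, AAs, Adj, Trn. rewrite csum_conj. apply csum_ext; intros.
  rewrite !Cconj_mul, !Cconj_conj. ring.
Qed.

Lemma Mscale_AAs d e s X i j : 0 <= s -> Mscale s (AAs d e X) i j = AAs d e (sc s X) i j.
Proof. intros Hs. unfold Mscale, AAs, sc. rewrite <- csum_scal. apply csum_ext; intros.
  rewrite Cconj_mul, Cconj_RtoC.
  transitivity (Cmul (Cmul (RtoC (sqrt s)) (RtoC (sqrt s))) (Cmul (X i k) (Cconj (X j k)))).
  rewrite <- RtoC_mul, sqrt_sqrt; auto. ring. Qed.

Lemma Trn_sc s X : Trn (sc s X) = sc s (Trn X).
Proof. reflexivity. Qed.

Lemma hp_Mscale d e s X : 0 <= s -> herm d (Mscale s (AAs d e X)) /\ psd d (Mscale s (AAs d e X)).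
Proof. intros Hs. split.
  - eapply herm_ext; [|apply (herm_AAs d e (sc s X))]. intros; rewrite Mscale_AAs; auto.
  - eapply psd_ext; [|apply (psd_AAs d e (sc s X))]. intros; rewrite Mscale_AAs; auto. Qed.

Lemma vN_scaled_AB dA dB chi s : 0 <= s ->
  vN_entropy dA (Mscale s (ptraceB dB chi)) = vN_entropy dB (Mscale s (ptraceA dA chi)).
Proof.
  intros Hs. change (ptraceB dB chi) with (AAs dA dB chi).
  change (ptraceA dA chi) with (AAs dB dA (Trn chi)).
  rewrite <- (vN_ext dA (AAs dA dB (sc s chi))) by (try apply herm_AAs; try apply psd_AAs; intros; rewrite Mscale_AAs; auto).
  rewrite <- (vN_ext dB (AAs dB dA (sc s (Trn chi)))) by (try apply herm_AAs; try apply psd_AAs; intros; rewrite Mscale_AAs; auto).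
  rewrite schmidt. reflexivity.
Qed.

Lemma trace_AAs d e X : trace d (AAs d e X) = bnorm2 d e X.
Proof. unfold trace, AAs, bnorm2. apply rsum_ext; intros. rewrite Re_csum. apply rsum_ext; intros.
  rewrite Cnorm2_eq'. reflexivity. Qed.

Lemma trace_AAs_T d e X : trace e (AAs e d (Trn X)) = bnorm2 d e X.
Proof. unfold trace, AAs, bnorm2, Trn. rewrite rsum_swap. apply rsum_ext; intros. rewrite Re_csum. apply rsum_ext; intros.
  rewrite Cnorm2_eq'. reflexivity. Qed.

Lemma trace_Mscale n s M : trace n (Mscale s M) = s * trace n M.
Proof. unfold trace, Mscale. rewrite <- rsum_scal. apply rsum_ext; intros. simpl; ring. Qed.

Lemma vN_Mscale1 n M : herm n M -> psd n M -> vN_entropy n (Mscale (/ 1) M) = vN_entropy n M.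
Proof. intros. symmetry. apply vN_ext; auto. intros. unfold Mscale. rewrite Rinv_1. ring. Qed.

Lemma lower_app d e G1 G2 R g : herm d R ->
  (forall i j, (i < d)%nat -> (j < d)%nat -> Cmul (RtoC 2) (R i j) = Cadd (AAs d e G1 i j) (AAs d e G2 i j)) ->
  trace d (AAs d e G1) = g -> trace d (AAs d e G2) = 2 - g -> 0 < g <= 2 ->
  g / 2 * vN_entropy d (Mscale (/ g) (AAs d e G1)) <= vN_entropy d R.
Proof.
  intros HR E T1 T2 Hg.
  assert (Hig : 0 <= / g) by (left; apply Rinv_0_lt_compat; lra).
  destruct (hp_Mscale d e (/ g) G1 Hig) as [Hh1 Hp1].
  destruct (hp_Mscale d e (/ 2) G2 ltac:(lra)) as [Hh2 Hp2].
  apply (lower d R (Mscale (/ g) (AAs d e G1)) (Mscale (/ 2) (AAs d e G2)) (g / 2)); auto.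
  - intros i j Hi Hj. unfold Mscale.
    transitivity (Cmul (RtoC (/ 2)) (Cmul (RtoC 2) (R i j))).
    destruct (R i j); apply Cx_eq; simpl; field.
    rewrite E by auto. generalize (AAs d e G1 i j) (AAs d e G2 i j). intros [] []; apply Cx_eq; simpl; field; lra.
  - lra.
  - rewrite trace_Mscale, T1. field. lra.
  - rewrite trace_Mscale, T2. field.
Qed.

Lemma bcomb_par a b (psi phi : BVec) i j k l :
  Cadd (Cmul (bcomb a b psi phi i j) (Cconj (bcomb a b psi phi k l)))
       (Cmul (bcomb a (Copp b) psi phi i j) (Cconj (bcomb a (Copp b) psi phi k l))) =
  Cmul (RtoC 2) (Cadd (Cmul (RtoC (Cnorm2 a)) (Cmul (psi i j) (Cconj (psi k l))))
                      (Cmul (RtoC (Cnorm2 b)) (Cmul (phi i j) (Cconj (phi k l))))).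
Proof. unfold bcomb. rewrite <- !Cnorm2_eq. rewrite !Cconj_add, !Cconj_mul, Cconj_opp.
  replace (RtoC 2) with (Cadd Cone Cone) by (apply Cx_eq; simpl; ring). ring. Qed.

Lemma bnorm2_par dA dB a b psi phi :
  bnorm2 dA dB (bcomb a b psi phi) + bnorm2 dA dB (bcomb a (Copp b) psi phi) =
  2 * Cnorm2 a * bnorm2 dA dB psi + 2 * Cnorm2 b * bnorm2 dA dB phi.
Proof.
  unfold bnorm2. rewrite <- rsum_add, <- !rsum_scal, <- rsum_add. apply rsum_ext; intros.
  rewrite <- rsum_add, <- !rsum_scal, <- rsum_add. apply rsum_ext; intros.
  apply RtoC_inj. rewrite !RtoC_add, !RtoC_mul, <- !Cnorm2_eq'. rewrite bcomb_par.
  rewrite <- !Cnorm2_eq'. ring.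
Qed.

Lemma bnorm2_pos dA dB chi : ~ (forall i j, (i < dA)%nat -> (j < dB)%nat -> chi i j = C0) -> 0 < bnorm2 dA dB chi.
Proof.
  intros H. apply NNPP. intros H1. apply H. intros i j Hi Hj.
  assert (Hnn : forall i, 0 <= rsum dB (fun j => Cnorm2 (chi i j))) by (intros; apply rsum_nonneg; intros; apply Cnorm2_nonneg).
  assert (0 <= bnorm2 dA dB chi) by (apply rsum_nonneg; auto).
  assert (bnorm2 dA dB chi = 0) by lra.
  apply Cnorm2_zero.
  pose proof (rsum_zero_nonneg dA _ (fun i _ => Hnn i) H2 i Hi).
  apply (rsum_zero_nonneg dB (fun j => Cnorm2 (chi i j))); auto. intros; apply Cnorm2_nonneg.
Qed.

Theorem theorem2 (dA dB : nat) (Psi Phi : BVec) (alpha beta : Cx) :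
  bnorm2 dA dB Psi = 1 ->
  bnorm2 dA dB Phi = 1 ->
  Cnorm2 alpha + Cnorm2 beta = 1 ->
  ~ (forall i j, (i < dA)%nat -> (j < dB)%nat ->
       bcomb alpha beta Psi Phi i j = C0) ->
  let Gamma := bcomb alpha beta Psi Phi in
  let rhoA := Madd (Mscale (Cnorm2 alpha) (ptraceB dB Psi))
                   (Mscale (Cnorm2 beta) (ptraceB dB Phi)) in
  let rhoB := Madd (Mscale (Cnorm2 alpha) (ptraceA dA Psi))
                   (Mscale (Cnorm2 beta) (ptraceA dA Phi)) in
  bnorm2 dA dB Gamma * entanglement dA dB Gamma <=
  2 * (Cnorm2 alpha * entanglement dA dB Psi
       + Cnorm2 beta * entanglement dA dB Phi
       + h2 (Cnorm2 alpha)
       - Rabs (vN_entropy dA rhoA - vN_entropy dB rhoB)).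
Proof.
  intros HPsi HPhi Hab Hnz Gamma rhoA rhoB.
  set (p := Cnorm2 alpha) in *. set (q := Cnorm2 beta) in *.
  assert (Hp : 0 <= p) by apply Cnorm2_nonneg. assert (Hq : 0 <= q) by apply Cnorm2_nonneg.
  set (Gamma' := bcomb alpha (Copp beta) Psi Phi).
  set (g := bnorm2 dA dB Gamma).
  assert (Hg : 0 < g) by (apply bnorm2_pos; auto).
  assert (Hpar : g + bnorm2 dA dB Gamma' = 2).
  { unfold g, Gamma, Gamma'. rewrite bnorm2_par, HPsi, HPhi. fold p q. lra. }
  assert (Hg' : 0 <= bnorm2 dA dB Gamma') by (apply rsum_nonneg; intros; apply rsum_nonneg; intros; apply Cnorm2_nonneg).
  assert (EPsi : entanglement dA dB Psi = vN_entropy dA (AAs dA dB Psi)).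
  { unfold entanglement. rewrite HPsi. apply vN_Mscale1. apply herm_AAs. apply psd_AAs. }
  assert (EPhi : entanglement dA dB Phi = vN_entropy dA (AAs dA dB Phi)).
  { unfold entanglement. rewrite HPhi. apply vN_Mscale1. apply herm_AAs. apply psd_AAs. }
  assert (UA : vN_entropy dA rhoA <= p * entanglement dA dB Psi + q * entanglement dA dB Phi + h2 p).
  { rewrite EPsi, EPhi. apply (upper dA rhoA (AAs dA dB Psi) (AAs dA dB Phi) p q);
      [apply herm_AAs | apply psd_AAs | apply herm_AAs | apply psd_AAs | rewrite trace_AAs; auto
      | rewrite trace_AAs; auto | auto | auto | auto | intros; reflexivity]. }
  assert (UB : vN_entropy dB rhoB <= p * entanglement dA dB Psi + q * entanglement dA dB Phi + h2 p).
  { rewrite EPsi, EPhi, (schmidt dA dB Psi), (schmidt dA dB Phi). apply (upper dB rhoB (AAs dB dA (Trn Psi)) (AAs dB dA (Trn Phi)) p q);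
      [apply herm_AAs | apply psd_AAs | apply herm_AAs | apply psd_AAs | rewrite trace_AAs_T; auto
      | rewrite trace_AAs_T; auto | auto | auto | auto | intros; reflexivity]. }
  assert (LA : g / 2 * entanglement dA dB Gamma <= vN_entropy dA rhoA).
  { unfold entanglement. fold g. change (ptraceB dB Gamma) with (AAs dA dB Gamma).
    apply (lower_app dA dB Gamma Gamma' rhoA g).
    - eapply herm_ext; [|apply (herm_comb dA p (AAs dA dB Psi) q (AAs dA dB Phi)); apply herm_AAs].
      intros; reflexivity.
    - intros i j Hi Hj. unfold AAs. rewrite <- csum_add. unfold rhoA, Madd, Mscale.
      change (ptraceB dB Psi i j) with (csum dB (fun k => Cmul (Psi i k) (Cconj (Psi j k)))).
      change (ptraceB dB Phi i j) with (csum dB (fun k => Cmul (Phi i k) (Cconj (Phi j k)))).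
      rewrite <- !csum_scal, <- csum_add, <- csum_scal. apply csum_ext; intros.
      unfold Gamma, Gamma'. rewrite bcomb_par. auto.
    - rewrite trace_AAs; auto.
    - rewrite trace_AAs; lra.
    - lra. }
  assert (LB : g / 2 * entanglement dA dB Gamma <= vN_entropy dB rhoB).
  { unfold entanglement. fold g. rewrite vN_scaled_AB by (left; apply Rinv_0_lt_compat; auto).
    change (ptraceA dA Gamma) with (AAs dB dA (Trn Gamma)).
    apply (lower_app dB dA (Trn Gamma) (Trn Gamma') rhoB g).
    - eapply herm_ext; [|apply (herm_comb dB p (AAs dB dA (Trn Psi)) q (AAs dB dA (Trn Phi))); apply herm_AAs].
      intros; reflexivity.
    - intros i j Hi Hj. unfold AAs. rewrite <- csum_add. unfold rhoB, Madd, Mscale.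
      change (ptraceA dA Psi i j) with (csum dA (fun k => Cmul (Psi k i) (Cconj (Psi k j)))).
      change (ptraceA dA Phi i j) with (csum dA (fun k => Cmul (Phi k i) (Cconj (Phi k j)))).
      rewrite <- !csum_scal, <- csum_add, <- csum_scal. apply csum_ext; intros.
      unfold Gamma, Gamma', Trn. rewrite bcomb_par. auto.
    - rewrite trace_AAs_T; auto.
    - rewrite trace_AAs_T; lra.
    - lra. }
  fold g. unfold Rabs. destruct (Rcase_abs (vN_entropy dA rhoA - vN_entropy dB rhoB)); lra.
Qed.
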